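(* Fix $T>0$. Let $\theta:[0,T]\to[0,1]$ be continuous and let $\beta:[0,T]\to[\beta_*,\beta^*]$ be continuous. Then there exists a unique solution $\boldsymbol{x}=(S,E_{fc},E_{pc},I_{fc},I_{pc},H,R)$ on $[0,T]$ of the initial value problem \begin{align*} S' &= p_S-\Gamma S-\mu S,\\ E_{fc}' &= p_{Efc}+\theta\Gamma S-\Big(\gamma_{fc}+\gamma^{+}+\sigma_E+\mu-\tfrac{\gamma_E}{N}E_{pc}\Big)E_{fc},\\ E_{pc}' &= p_{Epc}+(1-\theta)\Gamma S-\Big(\gamma_{pc}+\gamma^{-}+\sigma_E+\mu+\tfrac{\gamma_E}{N}E_{fc}\Big)E_{pc},\\ I_{fc}' &= p_{Ifc}+\gamma_{fc}E_{fc}+\gamma^{-}E_{pc}-\Big(\delta+\sigma_I+d_I+\mu-\tfrac{\gamma_I}{N}I_{pc}\Big)I_{fc},\\ I_{pc}' &= p_{Ipc}+\gamma_{pc}E_{pc}+\gamma^{+}E_{fc}-\Big(\delta+\sigma_I+d_I+\mu+\tfrac{\gamma_I}{N}I_{fc}\Big)I_{pc},\\ H' &= p_H+\delta(I_{fc}+I_{pc})-(\sigma_H+d_H+\mu)H,\\ R' &= p_R+\sigma_E(E_{fc}+E_{pc})+\sigma_I(I_{fc}+I_{pc})+\sigma_H H-\mu R, \end{align*} with $N=S+E_{fc}+E_{pc}+I_{fc}+I_{pc}+H+R$, $\Gamma=\frac{\beta}{N}\big(\epsilon_{Efc}E_{fc}+\epsilon_{Epc}E_{pc}+\epsilon_{Ifc}I_{fc}+\epsilon_{Ipc}I_{pc}+\epsilon_H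 H\big)$, and initial data $S(0)=S_0>0$, $E_{fc}(0),E_{pc}(0),I_{fc}(0),I_{pc}(0),H(0),R(0)\ge 0$. Moreover, there is a constant $C>0$ independent of $\beta$ such that if $\boldsymbol{x}$ and $\hat{\boldsymbol{x}}$ are the solutions corresponding to two such continuous functions $\beta$ and $\hat\beta$ (with values in $[\beta_*,\beta^*]$), then for all $t\in[0,T]$, \[ |\boldsymbol{x}(t)-\hat{\boldsymbol{x}}(t)|^2\le C\int_0^t|\beta(s)-\hat\beta(s)|^2\,ds . \]
   Context: Standing assumptions: the input functions $p_S,p_{Efc},p_{Epc},p_{Ifc},p_{Ipc},p_H,p_R$ are bounded, nonnegative, smooth functions of $t$; the parameters $\mu,\epsilon_{Efc},\epsilon_{Epc},\epsilon_{Ifc},\epsilon_{Ipc},\epsilon_H,\gamma_{fc},\gamma_{pc},\gamma^{+},\gamma^{-},\delta,d_I,d_H,\sigma_E,\sigma_I,\sigma_H$ are positive constants; $\gamma_E,\gamma_I$ are real constants satisfying $|\gamma_E|<\min\{\gamma_{fc}+\gamma^{+}+\sigma_E+\mu,\ \gamma_{pc}+\gamma^{-}+\sigma_E+\mu\}$ and $|\gamma_I|<\delta+\sigma_I+d_I+\mu$; and $[\beta_*,\beta^*]\subset(0,1]$. *)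

(* Defs.v *)
From Stdlib Require Import Reals.
From Coquelicot Require Import Coquelicot.
Open Scope R_scope.

Record state : Type := mkState {
  xS : R; xEfc : R; xEpc : R; xIfc : R; xIpc : R; xH : R; xR : R }.

Record params : Type := mkParams {
  mu : R; eps_Efc : R; eps_Epc : R; eps_Ifc : R; eps_Ipc : R; eps_H : R;
  gam_fc : R; gam_pc : R; gam_plus : R; gam_minus : R; delta : R;
  d_I : R; d_H : R; sig_E : R; sig_I : R; sig_H : R;
  gam_E : R; gam_I : R }.

Definition params_ok (P : params) : Prop :=
  0 < mu P /\ 0 < eps_Efc P /\ 0 < eps_Epc P /\ 0 < eps_Ifc P /\
  0 < eps_Ipc P /\ 0 < eps_H P /\ 0 < gam_fc P /\ 0 < gam_pc P /\
  0 < gam_plus P /\ 0 < gam_minus P /\ 0 < delta P /\ 0 < d_I P /\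
  0 < d_H P /\ 0 < sig_E P /\ 0 < sig_I P /\ 0 < sig_H P /\
  Rabs (gam_E P) < Rmin (gam_fc P + gam_plus P + sig_E P + mu P)
                        (gam_pc P + gam_minus P + sig_E P + mu P) /\
  Rabs (gam_I P) < delta P + sig_I P + d_I P + mu P.

Record inputs : Type := mkInputs {
  pS : R -> R; pEfc : R -> R; pEpc : R -> R; pIfc : R -> R;
  pIpc : R -> R; pH : R -> R; pR : R -> R }.

Definition input_ok (p : R -> R) : Prop :=
  (exists M, forall t, Rabs (p t) <= M) /\
  (forall t, 0 <= p t) /\
  (forall (n : nat) (t : R), ex_derive_n p n t).

Definition inputs_ok (I : inputs) : Prop :=
  input_ok (pS I) /\ input_ok (pEfc I) /\ input_ok (pEpc I) /\
  input_ok (pIfc I) /\ input_ok (pIpc I) /\ input_ok (pH I) /\ input_ok (pR I).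

Definition cont_on (a b : R) (f : R -> R) : Prop :=
  forall t, a <= t <= b -> forall eps, 0 < eps -> exists dlt, 0 < dlt /\
    forall s, a <= s <= b -> Rabs (s - t) < dlt -> Rabs (f s - f t) < eps.

(* f is differentiable on [a,b] with derivative f' (one-sided at the
   endpoints, i.e. derivative relative to [a,b]). *)
Definition deriv_on (a b : R) (f f' : R -> R) : Prop :=
  forall t, a <= t <= b -> forall eps, 0 < eps -> exists dlt, 0 < dlt /\
    forall s, a <= s <= b -> 0 < Rabs (s - t) < dlt ->
      Rabs ((f s - f t) / (s - t) - f' t) < eps.

Definition Ntot (x : state) : R :=
  xS x + xEfc x + xEpc x + xIfc x + xIpc x + xH x + xR x.

Definition Gam (P : params) (b : R) (x : state) : R :=
  b / Ntot x * (eps_Efc P * xEfc x + eps_Epc P * xEpc x + eps_Ifc P * xIfc x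
                + eps_Ipc P * xIpc x + eps_H P * xH x).

Definition rhs (P : params) (I : inputs) (theta beta : R -> R) (t : R)
  (x : state) : state :=
  let N := Ntot x in
  let G := Gam P (beta t) x in
  mkState
    (pS I t - G * xS x - mu P * xS x)
    (pEfc I t + theta t * G * xS x
       - (gam_fc P + gam_plus P + sig_E P + mu P - gam_E P / N * xEpc x) * xEfc x)
    (pEpc I t + (1 - theta t) * G * xS x
       - (gam_pc P + gam_minus P + sig_E P + mu P + gam_E P / N * xEfc x) * xEpc x)
    (pIfc I t + gam_fc P * xEfc x + gam_minus P * xEpc x
       - (delta P + sig_I P + d_I P + mu P - gam_I P / N * xIpc x) * xIfc x)
    (pIpc I t + gam_pc P * xEpc x + gam_plus P * xEfc x
       - (delta P + sig_I P + d_I P + mu P + gam_I P / N * xIfc x) * xIpc x)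
    (pH I t + delta P * (xIfc x + xIpc x) - (sig_H P + d_H P + mu P) * xH x)
    (pR I t + sig_E P * (xEfc x + xEpc x) + sig_I P * (xIfc x + xIpc x)
       + sig_H P * xH x - mu P * xR x).

Definition is_solution (P : params) (I : inputs) (theta beta : R -> R)
  (T : R) (x0 : state) (x : R -> state) : Prop :=
  x 0 = x0 /\
  deriv_on 0 T (fun t => xS (x t))   (fun t => xS   (rhs P I theta beta t (x t))) /\
  deriv_on 0 T (fun t => xEfc (x t)) (fun t => xEfc (rhs P I theta beta t (x t))) /\
  deriv_on 0 T (fun t => xEpc (x t)) (fun t => xEpc (rhs P I theta beta t (x t))) /\
  deriv_on 0 T (fun t => xIfc (x t)) (fun t => xIfc (rhs P I theta beta t (x t))) /\
  deriv_on 0 T (fun t => xIpc (x t)) (fun t => xIpc (rhs P I theta beta t (x t))) /\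
  deriv_on 0 T (fun t => xH (x t))   (fun t => xH   (rhs P I theta beta t (x t))) /\
  deriv_on 0 T (fun t => xR (x t))   (fun t => xR   (rhs P I theta beta t (x t))).

Definition init_ok (x0 : state) : Prop :=
  0 < xS x0 /\ 0 <= xEfc x0 /\ 0 <= xEpc x0 /\ 0 <= xIfc x0 /\
  0 <= xIpc x0 /\ 0 <= xH x0 /\ 0 <= xR x0.

Definition beta_ok (T blo bhi : R) (beta : R -> R) : Prop :=
  cont_on 0 T beta /\ forall t, 0 <= t <= T -> blo <= beta t <= bhi.

Definition dist2 (x y : state) : R :=
  (xS x - xS y)^2 + (xEfc x - xEfc y)^2 + (xEpc x - xEpc y)^2
  + (xIfc x - xIfc y)^2 + (xIpc x - xIpc y)^2 + (xH x - xH y)^2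
  + (xR x - xR y)^2.

(* Main.v *)
Require Import Defs.
From Stdlib Require Import Reals Lra Lia Classical.
From Coquelicot Require Import Coquelicot.
Require Import Defs.
Open Scope R_scope.

Definition clamp (a b x : R) := Rmax a (Rmin b x).

Lemma clamp_in a b x : a <= b -> a <= clamp a b x <= b.
Proof. intros; unfold clamp, Rmax, Rmin; repeat destruct Rle_dec; lra. Qed.

Lemma clamp_id a b x : a <= x <= b -> clamp a b x = x.
Proof. intros; unfold clamp, Rmax, Rmin; repeat destruct Rle_dec; lra. Qed.

Lemma clamp_lip a b x y : a <= b -> Rabs (clamp a b x - clamp a b y) <= Rabs (x - y).
Proof.
  intros; unfold clamp, Rmax, Rmin; repeat destruct Rle_dec;
  unfold Rabs; repeat destruct Rcase_abs; lra.
Qed.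

Lemma cont_clamp a b f : a <= b -> cont_on a b f ->
  forall t, continuous (fun s => f (clamp a b s)) t.
Proof.
  intros Hab Hf t. apply continuity_pt_filterlim.
  intros eps Heps.
  destruct (Hf (clamp a b t) (clamp_in a b t Hab) eps Heps) as [d [Hd H]].
  exists d; split; [lra|]. intros s [_ Hs]. simpl in *. unfold Rdist in *.
  destruct (Req_dec (clamp a b s) (clamp a b t)) as [E|E].
  - rewrite E. unfold Rminus; rewrite Rplus_opp_r, Rabs_R0; lra.
  - apply H. apply clamp_in; auto.
    pose proof (clamp_lip a b s t Hab). lra.
Qed.

Lemma cont_of_clamp a b f : a <= b ->
  (forall t, a <= t <= b -> continuous (fun s => f (clamp a b s)) t) -> cont_on a b f.
Proof.
  intros Hab Hf t Ht eps Heps.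
  generalize (proj2 (continuity_pt_filterlim _ _) (Hf t Ht) eps Heps).
  intros [d [Hd H]]. exists d; split; [lra|]. intros s Hs Hst.
  specialize (H s). simpl in H. unfold Rdist in H.
  rewrite !clamp_id in H by lra.
  destruct (Req_dec t s) as [E|E].
  { subst. unfold Rminus; rewrite Rplus_opp_r, Rabs_R0; lra. }
  apply H. split; [split; [exact I| exact E]| exact Hst].
Qed.

Lemma deriv_interior a b f f' t : deriv_on a b f f' -> a < t < b ->
  is_derive f t (f' t).
Proof.
  intros Hd Ht. apply is_derive_Reals. intros eps Heps.
  destruct (Hd t ltac:(lra) eps Heps) as [d [Hd0 H]].
  assert (Hp : 0 < Rmin d (Rmin (t - a) (b - t))).
  { repeat apply Rmin_pos; lra. }
  exists (mkposreal _ Hp). intros h Hh0 Hh. simpl in Hh.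
  assert (E : t + h - t = h) by ring.
  specialize (H (t + h)). rewrite E in H. apply H.
  - pose proof (Rmin_r d (Rmin (t - a) (b - t))).
    pose proof (Rmin_l (t-a) (b-t)). pose proof (Rmin_r (t-a) (b-t)).
    unfold Rabs in Hh; destruct Rcase_abs in Hh; lra.
  - split. apply Rabs_pos_lt; auto.
    pose proof (Rmin_l d (Rmin (t - a) (b - t))). lra.
Qed.

Lemma deriv_cont a b f f' : deriv_on a b f f' -> cont_on a b f.
Proof.
  intros Hd t Ht eps Heps.
  destruct (Hd t Ht 1 Rlt_0_1) as [d [Hd0 H]].
  set (K := Rabs (f' t) + 1).
  assert (HK : 0 < K) by (unfold K; pose proof (Rabs_pos (f' t)); lra).
  assert (Hp : 0 < Rmin d (eps / K)).
  { apply Rmin_pos; auto. apply Rdiv_lt_0_compat; auto. }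
  exists (Rmin d (eps / K)); split; auto.
  intros s Hs Hst.
  destruct (Req_dec s t) as [E|E].
  { subst. unfold Rminus; rewrite Rplus_opp_r, Rabs_R0; lra. }
  assert (H0 : 0 < Rabs (s - t)) by (apply Rabs_pos_lt; lra).
  specialize (H s Hs (conj H0 (Rlt_le_trans _ _ _ Hst (Rmin_l _ _)))).
  assert (E2 : f s - f t = ((f s - f t) / (s - t) - f' t) * (s - t) + f' t * (s - t)).
  { field. lra. }
  rewrite E2.
  eapply Rle_lt_trans. apply Rabs_triang. rewrite !Rabs_mult.
  assert (Hst2 : Rabs (s - t) < eps / K) by (eapply Rlt_le_trans; [exact Hst| apply Rmin_r]).
  assert (Rabs (s - t) * K < eps).
  { apply (Rmult_lt_compat_r K) in Hst2; auto. unfold Rdiv in Hst2.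
    rewrite Rmult_assoc, Rinv_l in Hst2 by lra. lra. }
  unfold K in *. pose proof (Rabs_pos (f' t)).
  pose proof (Rabs_pos ((f s - f t) / (s - t) - f' t)). nra.
Qed.

Lemma deriv_sub a b a' b' f f' : a <= a' -> b' <= b -> deriv_on a b f f' -> deriv_on a' b' f f'.
Proof.
  intros H1 H2 Hd t Ht eps Heps. destruct (Hd t ltac:(lra) eps Heps) as [d [Hd0 H]].
  exists d; split; auto. intros s Hs. apply H. lra.
Qed.

Lemma deriv_of_global a b f F f' : (forall t, a <= t <= b -> f t = F t) ->
  (forall t, a <= t <= b -> is_derive F t (f' t)) -> deriv_on a b f f'.
Proof.
  intros E Hd t Ht eps Heps.
  destruct (proj1 (is_derive_Reals _ _ _) (Hd t Ht) eps Heps) as [d H].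
  exists d; split; [apply cond_pos|]. intros s Hs [Hs0 Hs1].
  rewrite !E by lra.
  assert (Hne : s - t <> 0) by (intro Z; rewrite Z, Rabs_R0 in Hs0; lra).
  specialize (H (s - t) Hne Hs1). replace (t + (s - t)) with s in H by ring. exact H.
Qed.

Lemma mono a b F F' : a <= b ->
  (forall t, a < t < b -> is_derive F t (F' t)) -> cont_on a b F ->
  (forall t, a <= t <= b -> F' t <= 0) -> F b <= F a.
Proof.
  intros Hab Hd Hc Hneg.
  destruct (Req_dec a b) as [E|E]. { subst; lra. }
  destruct (MVT_gen (fun s => F (clamp a b s)) a b F') as [c [Hc1 Hc2]].
  - intros x Hx. rewrite Rmin_left, Rmax_right in Hx by lra.
    apply is_derive_ext_loc with F; [|apply Hd; lra].
    assert (Hp : 0 < Rmin (x - a) (b - x)) by (apply Rmin_pos; lra).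
    exists (mkposreal _ Hp). intros y Hy. unfold ball in Hy; simpl in Hy.
    unfold AbsRing_ball, abs, minus, plus, opp in Hy; simpl in Hy.
    pose proof (Rmin_l (x-a) (b-x)); pose proof (Rmin_r (x-a) (b-x)).
    rewrite clamp_id; auto. unfold Rabs in Hy; destruct Rcase_abs in Hy; lra.
  - intros x Hx. apply continuity_pt_filterlim. apply cont_clamp; auto.
  - rewrite Rmin_left, Rmax_right in Hc1 by lra.
    rewrite !clamp_id in Hc2 by lra.
    specialize (Hneg c Hc1). nra.
Qed.

Lemma cont_on_clampE a b f : a <= b -> cont_on a b f <-> forall t, continuous (fun s => f (clamp a b s)) t.
Proof.
  intros Hab; split. apply cont_clamp; auto. intros H; apply cont_of_clamp; auto.
Qed.

Lemma cont_on_plus a b f g : a <= b -> cont_on a b f -> cont_on a b g -> cont_on a b (fun s => f s + g s).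
Proof.
  intros Hab Hf Hg. pose proof (cont_clamp a b f Hab Hf) as Hf'. pose proof (cont_clamp a b g Hab Hg) as Hg'. apply cont_of_clamp; auto.
  intros t _. apply (continuous_plus (fun s => f (clamp a b s)) (fun s => g (clamp a b s))); auto.
Qed.

Lemma cont_on_minus a b f g : a <= b -> cont_on a b f -> cont_on a b g -> cont_on a b (fun s => f s - g s).
Proof.
  intros Hab Hf Hg. pose proof (cont_clamp a b f Hab Hf) as Hf'. pose proof (cont_clamp a b g Hab Hg) as Hg'. apply cont_of_clamp; auto.
  intros t _. apply (continuous_minus (fun s => f (clamp a b s)) (fun s => g (clamp a b s))); auto.
Qed.

Lemma cont_on_mult a b f g : a <= b -> cont_on a b f -> cont_on a b g -> cont_on a b (fun s => f s * g s).
Proof.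
  intros Hab Hf Hg. pose proof (cont_clamp a b f Hab Hf) as Hf'. pose proof (cont_clamp a b g Hab Hg) as Hg'. apply cont_of_clamp; auto.
  intros t _. apply (continuous_mult (fun s => f (clamp a b s)) (fun s => g (clamp a b s))); auto.
Qed.

Lemma cont_on_global a b f : a <= b -> (forall t, continuous f t) -> cont_on a b f.
Proof.
  intros Hab Hf. apply cont_of_clamp; auto. intros t _.
  apply (continuous_comp (clamp a b) f). 2: apply Hf.
  apply continuity_pt_filterlim. intros eps Heps. exists eps; split; auto.
  intros x [_ Hx]. simpl in *. unfold Rdist in *. eapply Rle_lt_trans. apply clamp_lip; auto. auto.
Qed.

Lemma cont_on_comp a b f g : a <= b -> cont_on a b f -> (forall x, continuous g x) -> cont_on a b (fun s => g (f s)).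
Proof.
  intros Hab Hf Hg. pose proof (cont_clamp a b f Hab Hf) as Hf'. apply cont_of_clamp; auto.
  intros t _. apply (continuous_comp (fun s => f (clamp a b s)) g); auto; apply Hf'.
Qed.

Lemma cont_on_sub a b a' b' f : a <= a' -> a' <= b' -> b' <= b -> cont_on a b f -> cont_on a' b' f.
Proof.
  intros H1 H2 H3 Hf t Ht eps Heps. destruct (Hf t ltac:(lra) eps Heps) as [d [Hd H]].
  exists d; split; auto. intros s Hs. apply H. lra.
Qed.

Lemma gronwall a b W W' g Gi c : a <= b -> 0 <= c ->
  (forall t, a < t < b -> is_derive W t (W' t)) -> cont_on a b W ->
  (forall t, is_derive Gi t (g t)) -> Gi a = 0 ->
  (forall t, a <= t <= b -> W' t <= c * W t + g t) -> (forall t, a <= t <= b -> 0 <= g t) ->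
  W a <= 0 -> forall t, a <= t <= b -> W t <= exp (c*(t-a)) * Gi t.
Proof.
  intros Hab Hc HW HWc HG HGa Hineq Hg HWa t Ht.
  set (e := fun s => exp (-(c*(s-a)))).
  assert (He : forall s, is_derive e s (-c * e s)).
  { intros s. unfold e. auto_derive; auto. unfold Rminus. ring. }
  assert (Hm := mono a t (fun s => W s * e s - Gi s)
     (fun s => W' s * e s + W s * (-c * e s) - g s) ltac:(lra)).
  assert (Hle : W t * e t - Gi t <= W a * e a - Gi a).
  { apply Hm.
    - intros s Hs. apply (is_derive_minus (fun s => W s * e s) Gi).
      2: apply HG.
      apply (is_derive_mult W e). apply HW; lra. apply He. intros; apply Rmult_comm.
    - apply cont_on_minus; try lra.
      apply cont_on_mult; try lra.
      apply cont_on_sub with a b; try lra; auto.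
      apply cont_on_global; try lra. intros x; apply (@ex_derive_continuous R_AbsRing R_NormedModule e); eexists; apply He.
      apply cont_on_global; try lra. intros x; apply (@ex_derive_continuous R_AbsRing R_NormedModule Gi); eexists; apply HG.
    - intros s Hs. specialize (Hineq s ltac:(lra)). specialize (Hg s ltac:(lra)).
      assert (0 < e s) by (unfold e; apply exp_pos).
      assert (e s <= 1).
      { unfold e. rewrite <- exp_0.
        assert (0 <= c*(s-a)) by nra.
        destruct (Req_dec (c*(s-a)) 0) as [Z|Z].
        rewrite Z. replace (-0) with 0 by ring. lra.
        apply Rlt_le, exp_increasing. lra. }
      assert (W' s * e s <= (c*W s + g s) * e s) by (apply Rmult_le_compat_r; lra).
      assert (g s * (e s - 1) <= 0) by nra.
      nra. }
  unfold e in Hle. replace (-(c*(a-a))) with 0 in Hle by ring. rewrite exp_0, HGa in Hle.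
  assert (Hprod : exp (c*(t-a)) * exp (-(c*(t-a))) = 1).
  { rewrite <- exp_plus. replace (c*(t-a) + -(c*(t-a))) with 0 by ring. apply exp_0. }
  pose proof (exp_pos (c*(t-a))).
  assert (W t * exp (- (c * (t - a))) <= Gi t) by lra.
  apply (Rmult_le_compat_l (exp (c*(t-a)))) in H0; [|lra].
  rewrite <- Rmult_assoc, (Rmult_comm _ (W t)), Rmult_assoc, Hprod in H0. lra.
Qed.

Definition phi (x : R) := (Rmin x 0)^2.

Lemma phi_derive x : is_derive phi x (2 * Rmin x 0).
Proof.
  destruct (Rtotal_order x 0) as [H|[H|H]].
  - apply is_derive_ext_loc with (fun y => y^2).
    + assert (Hp : 0 < -x) by lra. exists (mkposreal _ Hp). intros y Hy.
      unfold ball in Hy; simpl in Hy; unfold AbsRing_ball, abs, minus, plus, opp in Hy; simpl in Hy.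
      unfold phi. rewrite Rmin_left; auto. unfold Rabs in Hy; destruct Rcase_abs in Hy; lra.
    + rewrite Rmin_left by lra. auto_derive; auto. ring.
  - subst. apply is_derive_Reals. intros eps Heps. exists (mkposreal _ Heps).
    intros h Hh0 Hh. simpl in Hh. unfold phi.
    replace (Rmin 0 0) with 0 by (unfold Rmin; destruct Rle_dec; lra).
    rewrite Rplus_0_l.
    replace (0^2) with 0 by ring. rewrite Rminus_0_r, Rmult_0_r, Rminus_0_r.
    unfold Rmin; destruct Rle_dec.
    + replace (h^2/h) with h by (field; auto). auto.
    + replace (0^2/h) with 0 by (field; auto). rewrite Rabs_R0; auto.
  - apply is_derive_ext_loc with (fun y => 0).
    + exists (mkposreal _ H). intros y Hy.
      unfold ball in Hy; simpl in Hy; unfold AbsRing_ball, abs, minus, plus, opp in Hy; simpl in Hy.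
      unfold phi. rewrite Rmin_right. simpl. rewrite Rmult_0_l; reflexivity. unfold Rabs in Hy; destruct Rcase_abs in Hy; lra.
    + rewrite Rmin_right by lra. replace (2*0) with (@zero R_NormedModule).
      apply is_derive_const. simpl. unfold zero; simpl. lra.
Qed.

Lemma nonneg_lemma a b u u' : a <= b -> deriv_on a b u u' -> 0 <= u a ->
  (forall t, a <= t <= b -> u t < 0 -> 0 <= u' t) -> forall t, a <= t <= b -> 0 <= u t.
Proof.
  intros Hab Hd Ha Hs t Ht.
  assert (Hm := mono a t (fun s => phi (u s)) (fun s => u' s * (2 * Rmin (u s) 0)) ltac:(lra)).
  assert (Hle : phi (u t) <= phi (u a)).
  { apply Hm.
    - intros s Hs'. apply (is_derive_comp phi u). apply phi_derive.
      apply (deriv_interior a b); auto; lra.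
    - apply cont_on_comp; try lra. apply cont_on_sub with a b; try lra. eapply deriv_cont; eauto.
      intros x; apply (@ex_derive_continuous R_AbsRing R_NormedModule phi); eexists; apply phi_derive.
    - intros s Hs'. destruct (Rlt_dec (u s) 0).
      + specialize (Hs s ltac:(lra) r). rewrite Rmin_left by lra. nra.
      + rewrite Rmin_right by lra. lra. }
  unfold phi in Hle. rewrite (Rmin_right (u a)) in Hle by lra.
  destruct (Rlt_dec (u t) 0); [|lra].
  rewrite Rmin_left in Hle by lra. nra.
Qed.

Definition cp (i : nat) (x : state) : R :=
  match i with
  | 0%nat => xS x | 1%nat => xEfc x | 2%nat => xEpc x | 3%nat => xIfc x | 4%nat => xIpc x | 5%nat => xH x
  | _ => xR x end.

Definition nd (x y : state) : R :=
  Rabs (xS x - xS y) + Rabs (xEfc x - xEfc y) + Rabs (xEpc x - xEpc y) +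
  Rabs (xIfc x - xIfc y) + Rabs (xIpc x - xIpc y) + Rabs (xH x - xH y) + Rabs (xR x - xR y).

Lemma nd_ge x y i : Rabs (cp i x - cp i y) <= nd x y.
Proof.
  unfold nd. pose proof (Rabs_pos (xS x - xS y)). pose proof (Rabs_pos (xEfc x - xEfc y)).
  pose proof (Rabs_pos (xEpc x - xEpc y)). pose proof (Rabs_pos (xIfc x - xIfc y)).
  pose proof (Rabs_pos (xIpc x - xIpc y)). pose proof (Rabs_pos (xH x - xH y)).
  pose proof (Rabs_pos (xR x - xR y)).
  destruct i as [|[|[|[|[|[|i]]]]]]; simpl; lra.
Qed.

Definition LB (f : R -> state -> R) : Prop :=
  exists c L, 0 <= c /\ 0 <= L /\ (forall b x, Rabs (f b x) <= c) /\
    (forall b x b' y, Rabs (f b x - f b' y) <= L * (Rabs (b - b') + nd x y)).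

Lemma dz_pos b x b' y : 0 <= Rabs (b - b') + nd x y.
Proof. pose proof (Rabs_pos (b-b')). pose proof (nd_ge x y 0%nat). pose proof (Rabs_pos (cp 0%nat x - cp 0%nat y)). lra. Qed.

Lemma LB_const k : LB (fun _ _ => k).
Proof.
  exists (Rabs k), 0. repeat split; auto using Rabs_pos; try lra.
  intros; lra. intros. replace (k - k) with 0 by ring. rewrite Rabs_R0. pose proof (dz_pos b x b' y). lra.
Qed.

Lemma LB_add f g : LB f -> LB g -> LB (fun b x => f b x + g b x).
Proof.
  intros [c1 [L1 [? [? [Hb1 Hl1]]]]] [c2 [L2 [? [? [Hb2 Hl2]]]]].
  exists (c1 + c2), (L1 + L2). repeat split; try lra.
  - intros. eapply Rle_trans. apply Rabs_triang. specialize (Hb1 b x); specialize (Hb2 b x). lra.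
  - intros. replace (f b x + g b x - (f b' y + g b' y)) with ((f b x - f b' y) + (g b x - g b' y)) by ring.
    eapply Rle_trans. apply Rabs_triang. specialize (Hl1 b x b' y); specialize (Hl2 b x b' y). lra.
Qed.

Lemma LB_opp f : LB f -> LB (fun b x => - f b x).
Proof.
  intros [c1 [L1 [? [? [Hb1 Hl1]]]]]. exists c1, L1. repeat split; auto.
  - intros. rewrite Rabs_Ropp. auto.
  - intros. replace (- f b x - - f b' y) with (- (f b x - f b' y)) by ring. rewrite Rabs_Ropp. auto.
Qed.

Lemma LB_sub f g : LB f -> LB g -> LB (fun b x => f b x - g b x).
Proof. intros. apply (LB_add f (fun b x => - g b x)); auto. apply LB_opp; auto. Qed.

Lemma LB_mul f g : LB f -> LB g -> LB (fun b x => f b x * g b x).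
Proof.
  intros [c1 [L1 [? [? [Hb1 Hl1]]]]] [c2 [L2 [? [? [Hb2 Hl2]]]]].
  exists (c1 * c2), (c1 * L2 + c2 * L1). repeat split; try nra.
  - intros. rewrite Rabs_mult. specialize (Hb1 b x); specialize (Hb2 b x).
    apply Rmult_le_compat; auto using Rabs_pos.
  - intros. replace (f b x * g b x - f b' y * g b' y) with (f b x * (g b x - g b' y) + g b' y * (f b x - f b' y)) by ring.
    eapply Rle_trans. apply Rabs_triang. rewrite !Rabs_mult.
    specialize (Hl1 b x b' y); specialize (Hl2 b x b' y). specialize (Hb1 b x); specialize (Hb2 b' y).
    pose proof (dz_pos b x b' y).
    assert (Rabs (f b x) * Rabs (g b x - g b' y) <= c1 * (L2 * (Rabs (b - b') + nd x y))).
    { apply Rmult_le_compat; auto using Rabs_pos. }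
    assert (Rabs (g b' y) * Rabs (f b x - f b' y) <= c2 * (L1 * (Rabs (b - b') + nd x y))).
    { apply Rmult_le_compat; auto using Rabs_pos. }
    nra.
Qed.

Lemma LB_inv f n : 0 < n -> (forall b x, n <= f b x) -> LB f -> LB (fun b x => / f b x).
Proof.
  intros Hn Hf [c1 [L1 [? [? [Hb1 Hl1]]]]].
  exists (/ n), (L1 / (n * n)). repeat split.
  - left; apply Rinv_0_lt_compat; auto.
  - apply Rmult_le_pos; auto. left; apply Rinv_0_lt_compat; nra.
  - intros. specialize (Hf b x). rewrite Rabs_right.
    apply Rinv_le_contravar; auto. left; apply Rinv_0_lt_compat; lra.
  - intros. pose proof (Hf b x) as F1; pose proof (Hf b' y) as F2.
    replace (/ f b x - / f b' y) with ((f b' y - f b x) / (f b x * f b' y)) by (field; lra).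
    unfold Rdiv. rewrite Rabs_mult, Rabs_inv, (Rabs_right (f b x * f b' y)) by nra.
    rewrite <- Rabs_Ropp, Ropp_minus_distr.
    specialize (Hl1 b x b' y). pose proof (dz_pos b x b' y).
    assert (/ (f b x * f b' y) <= / (n * n)).
    { apply Rinv_le_contravar. nra. apply Rmult_le_compat; lra. }
    assert (0 < / (f b x * f b' y)) by (apply Rinv_0_lt_compat; nra).
    assert (0 < / (n * n)) by (apply Rinv_0_lt_compat; nra).
    pose proof (Rabs_pos (f b x - f b' y)).
    unfold Rdiv. nra.
Qed.

Lemma LB_clampb lo hi : lo <= hi -> LB (fun b _ => clamp lo hi b).
Proof.
  intros H. exists (Rmax (Rabs lo) (Rabs hi)), 1. repeat split; try lra.
  - apply Rle_trans with (Rabs lo); [apply Rabs_pos| apply Rmax_l].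
  - intros. pose proof (clamp_in lo hi b H). pose proof (Rmax_l (Rabs lo) (Rabs hi)).
    pose proof (Rmax_r (Rabs lo) (Rabs hi)). unfold Rabs in *. repeat destruct Rcase_abs; lra.
  - intros. pose proof (clamp_lip lo hi b b' H). pose proof (nd_ge x y 0%nat).
    pose proof (Rabs_pos (cp 0%nat x - cp 0%nat y)). lra.
Qed.

Lemma LB_clampc lo hi i : lo <= hi -> LB (fun _ x => clamp lo hi (cp i x)).
Proof.
  intros H. exists (Rmax (Rabs lo) (Rabs hi)), 1. repeat split; try lra.
  - apply Rle_trans with (Rabs lo); [apply Rabs_pos| apply Rmax_l].
  - intros. pose proof (clamp_in lo hi (cp i x) H). pose proof (Rmax_l (Rabs lo) (Rabs hi)).
    pose proof (Rmax_r (Rabs lo) (Rabs hi)). unfold Rabs in *. repeat destruct Rcase_abs; lra.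
  - intros. pose proof (clamp_lip lo hi (cp i x) (cp i y) H). pose proof (nd_ge x y i).
    pose proof (Rabs_pos (b - b')). lra.
Qed.

Section G.
Variables (P : params) (lo loN hi : R).

Definition cl i x := clamp lo hi (cp i x).
Definition Nb x := clamp loN hi (xS x) + cl 1 x + cl 2 x + cl 3 x + cl 4 x + cl 5 x + cl 6 x.
Definition iN x := / Nb x.
Definition Aa (b : R) x := clamp 0 1 b * iN x *
  (eps_Efc P * cl 1 x + eps_Epc P * cl 2 x + eps_Ifc P * cl 3 x + eps_Ipc P * cl 4 x + eps_H P * cl 5 x)
  * cl 0 x.

Definition Qc (i : nat) (x : state) : R :=
  match i with
  | 0%nat => - (mu P * cl 0 x)
  | 1%nat => - ((gam_fc P + gam_plus P + sig_E P + mu P - gam_E P * iN x * cl 2 x) * cl 1 x)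
  | 2%nat => - ((gam_pc P + gam_minus P + sig_E P + mu P + gam_E P * iN x * cl 1 x) * cl 2 x)
  | 3%nat => gam_fc P * cl 1 x + gam_minus P * cl 2 x
       - (delta P + sig_I P + d_I P + mu P - gam_I P * iN x * cl 4 x) * cl 3 x
  | 4%nat => gam_pc P * cl 2 x + gam_plus P * cl 1 x
       - (delta P + sig_I P + d_I P + mu P + gam_I P * iN x * cl 3 x) * cl 4 x
  | 5%nat => delta P * (cl 3 x + cl 4 x) - (sig_H P + d_H P + mu P) * cl 5 x
  | _ => sig_E P * (cl 1 x + cl 2 x) + sig_I P * (cl 3 x + cl 4 x) + sig_H P * cl 5 x - mu P * cl 6 x
  end.

Definition wgt (i : nat) (th : R) : R :=
  match i with 0%nat => -1 | 1%nat => th | 2%nat => 1 - th | _ => 0 end.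

Definition Gm (pv : state) (th b : R) (x : state) : state :=
  mkState (xS pv + wgt 0 th * Aa b x + Qc 0 x)
          (xEfc pv + wgt 1 th * Aa b x + Qc 1 x)
          (xEpc pv + wgt 2 th * Aa b x + Qc 2 x)
          (xIfc pv + wgt 3 th * Aa b x + Qc 3 x)
          (xIpc pv + wgt 4 th * Aa b x + Qc 4 x)
          (xH pv + wgt 5 th * Aa b x + Qc 5 x)
          (xR pv + wgt 6 th * Aa b x + Qc 6 x).

Lemma Gm_cp i pv th b x : cp i (Gm pv th b x) = cp i pv + wgt i th * Aa b x + Qc i x.
Proof. destruct i as [|[|[|[|[|[|i]]]]]]; reflexivity. Qed.

Hypothesis Hlh : lo <= hi.
Hypothesis HlN : loN <= hi.
Hypothesis Hpos : 0 < loN + 6 * lo.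

Lemma Nb_ge x : loN + 6 * lo <= Nb x.
Proof.
  unfold Nb, cl.
  pose proof (clamp_in loN hi (xS x) HlN).
  pose proof (clamp_in lo hi (cp 1 x) Hlh). pose proof (clamp_in lo hi (cp 2 x) Hlh).
  pose proof (clamp_in lo hi (cp 3 x) Hlh). pose proof (clamp_in lo hi (cp 4 x) Hlh).
  pose proof (clamp_in lo hi (cp 5 x) Hlh). pose proof (clamp_in lo hi (cp 6 x) Hlh).
  lra.
Qed.

Lemma LB_cl i : LB (fun _ x => cl i x).
Proof. apply LB_clampc; auto. Qed.

Lemma LB_iN : LB (fun _ x => iN x).
Proof.
  unfold iN. apply (LB_inv (fun _ x => Nb x) (loN + 6 * lo)); auto.
  intros; apply Nb_ge.
  unfold Nb.
  repeat apply LB_add; try apply LB_cl.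
  apply (LB_clampc loN hi 0); auto.
Qed.

Ltac lbt := repeat first [ apply LB_add | apply LB_sub | apply LB_mul | apply LB_opp
   | apply LB_cl | apply LB_iN | apply LB_clampb; lra | apply LB_const ].

Lemma LB_Aa : LB Aa.
Proof. unfold Aa. lbt. Qed.

Lemma LB_Qc i : LB (fun _ x => Qc i x).
Proof. destruct i as [|[|[|[|[|[|i]]]]]]; unfold Qc; lbt. Qed.


Lemma Qc_lip : exists L, 0 <= L /\ forall i b x b' y, Rabs (Qc i x - Qc i y) <= L * (Rabs (b - b') + nd x y).
Proof.
  destruct (LB_Qc 0) as [c0 [L0 [_ [H0 [_ Q0]]]]].
  destruct (LB_Qc 1) as [c1 [L1 [_ [H1 [_ Q1]]]]].
  destruct (LB_Qc 2) as [c2 [L2 [_ [H2 [_ Q2]]]]].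
  destruct (LB_Qc 3) as [c3 [L3 [_ [H3 [_ Q3]]]]].
  destruct (LB_Qc 4) as [c4 [L4 [_ [H4 [_ Q4]]]]].
  destruct (LB_Qc 5) as [c5 [L5 [_ [H5 [_ Q5]]]]].
  destruct (LB_Qc 6) as [c6 [L6 [_ [H6 [_ Q6]]]]].
  exists (L0+L1+L2+L3+L4+L5+L6). split. lra.
  intros i b x b' y. pose proof (dz_pos b x b' y).
  destruct i as [|[|[|[|[|[|i]]]]]];
  [ specialize (Q0 b x b' y) | specialize (Q1 b x b' y) | specialize (Q2 b x b' y)
  | specialize (Q3 b x b' y) | specialize (Q4 b x b' y) | specialize (Q5 b x b' y)
  | specialize (Q6 b x b' y); simpl in Q6 |- * ]; nra.
Qed.

Lemma Qc_bnd : exists c, 0 <= c /\ forall i x, Rabs (Qc i x) <= c.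
Proof.
  destruct (LB_Qc 0) as [c0 [L0 [? [_ [Q0 _]]]]].
  destruct (LB_Qc 1) as [c1 [L1 [? [_ [Q1 _]]]]].
  destruct (LB_Qc 2) as [c2 [L2 [? [_ [Q2 _]]]]].
  destruct (LB_Qc 3) as [c3 [L3 [? [_ [Q3 _]]]]].
  destruct (LB_Qc 4) as [c4 [L4 [? [_ [Q4 _]]]]].
  destruct (LB_Qc 5) as [c5 [L5 [? [_ [Q5 _]]]]].
  destruct (LB_Qc 6) as [c6 [L6 [? [_ [Q6 _]]]]].
  exists (c0+c1+c2+c3+c4+c5+c6). split. lra.
  intros i x.
  destruct i as [|[|[|[|[|[|i]]]]]];
  [ specialize (Q0 0 x) | specialize (Q1 0 x) | specialize (Q2 0 x)
  | specialize (Q3 0 x) | specialize (Q4 0 x) | specialize (Q5 0 x)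
  | specialize (Q6 0 x); simpl in Q6 |- * ]; lra.
Qed.

Lemma wgt_bnd i th : 0 <= th <= 1 -> Rabs (wgt i th) <= 1.
Proof.
  intros. destruct i as [|[|[|i]]]; simpl; unfold Rabs; repeat destruct Rcase_abs; lra.
Qed.

Lemma Gm_lip : exists L, 0 < L /\ forall pv th b x b' y i, 0 <= th <= 1 ->
  Rabs (cp i (Gm pv th b x) - cp i (Gm pv th b' y)) <= L * (Rabs (b - b') + nd x y).
Proof.
  destruct LB_Aa as [cA [LA [? [? [_ HA]]]]].
  destruct Qc_lip as [LQ [? HQ]].
  exists (LA + LQ + 1). split. lra.
  intros pv th b x b' y i Hth. rewrite !Gm_cp.
  replace (cp i pv + wgt i th * Aa b x + Qc i x - (cp i pv + wgt i th * Aa b' y + Qc i y))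
    with (wgt i th * (Aa b x - Aa b' y) + (Qc i x - Qc i y)) by ring.
  eapply Rle_trans. apply Rabs_triang. rewrite Rabs_mult.
  specialize (HA b x b' y). specialize (HQ i b x b' y). pose proof (wgt_bnd i th Hth).
  pose proof (dz_pos b x b' y). pose proof (Rabs_pos (Aa b x - Aa b' y)).
  pose proof (Rabs_pos (wgt i th)).
  assert (Rabs (wgt i th) * Rabs (Aa b x - Aa b' y) <= 1 * (LA * (Rabs (b - b') + nd x y))).
  { apply Rmult_le_compat; auto. }
  nra.
Qed.

Lemma Gm_bnd Mp : 0 <= Mp -> exists M, 0 < M /\ forall pv th b x i, 0 <= th <= 1 ->
  (forall j, Rabs (cp j pv) <= Mp) -> Rabs (cp i (Gm pv th b x)) <= M.
Proof.
  intros HMp.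
  destruct LB_Aa as [cA [LA [? [? [HA _]]]]].
  destruct Qc_bnd as [cQ [? HQ]].
  exists (Mp + cA + cQ + 1). split. lra.
  intros pv th b x i Hth Hp. rewrite Gm_cp.
  eapply Rle_trans. apply Rabs_triang. eapply Rle_trans. apply Rplus_le_compat_r. apply Rabs_triang.
  rewrite Rabs_mult. specialize (HA b x). specialize (HQ i x). specialize (Hp i).
  pose proof (wgt_bnd i th Hth). pose proof (Rabs_pos (Aa b x)). pose proof (Rabs_pos (wgt i th)).
  assert (Rabs (wgt i th) * Rabs (Aa b x) <= 1 * cA) by (apply Rmult_le_compat; auto).
  lra.
Qed.

End G.

Definition pvec (I : inputs) (t : R) : state :=
  mkState (pS I t) (pEfc I t) (pEpc I t) (pIfc I t) (pIpc I t) (pH I t) (pR I t).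

Lemma Gm_rhs P lo loN hi I theta beta t x :
  lo <= loN -> loN <= xS x <= hi -> lo <= xEfc x <= hi -> lo <= xEpc x <= hi ->
  lo <= xIfc x <= hi -> lo <= xIpc x <= hi -> lo <= xH x <= hi -> lo <= xR x <= hi ->
  0 <= beta t <= 1 ->
  Gm P lo loN hi (pvec I t) (theta t) (beta t) x = rhs P I theta beta t x.
Proof.
  intros. unfold Gm, Aa, Qc, iN, Nb, cl, rhs, Gam, Ntot, wgt. simpl.
  rewrite !clamp_id by lra. unfold Rdiv. f_equal; ring.
Qed.

Lemma Gm_sum P lo loN hi pv th b x :
  Ntot (Gm P lo loN hi pv th b x) = Ntot pv
    - mu P * (cl lo hi 0 x + cl lo hi 1 x + cl lo hi 2 x + cl lo hi 3 x + cl lo hi 4 x + cl lo hi 5 x + cl lo hi 6 x)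
    - d_I P * (cl lo hi 3 x + cl lo hi 4 x) - d_H P * cl lo hi 5 x.
Proof. unfold Ntot, Gm, Qc, wgt. simpl. ring. Qed.

Definition epsSum7 (P : params) := eps_Efc P + eps_Epc P + eps_Ifc P + eps_Ipc P + eps_H P.

Lemma cl_in lo hi i x : lo <= hi -> lo <= cl lo hi i x <= hi.
Proof. intros; apply clamp_in; auto. Qed.

Lemma Aa_facts P loN hi b x : params_ok P -> 0 < loN <= hi ->
  0 <= Aa P 0 loN hi b x <= epsSum7 P * cl 0 hi 0 x.
Proof.
  intros HP HlN. unfold params_ok in HP.
  assert (Hc : forall j, 0 <= cl 0 hi j x <= hi) by (intros; apply cl_in; lra).
  assert (HN : 0 < Nb 0 loN hi x) by (pose proof (Nb_ge 0 loN hi ltac:(lra) ltac:(lra) x); lra).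
  assert (HNs : cl 0 hi 1 x + cl 0 hi 2 x + cl 0 hi 3 x + cl 0 hi 4 x + cl 0 hi 5 x <= Nb 0 loN hi x).
  { unfold Nb. pose proof (clamp_in loN hi (xS x) ltac:(lra)). pose proof (Hc 6%nat). lra. }
  set (E := eps_Efc P * cl 0 hi 1 x + eps_Epc P * cl 0 hi 2 x + eps_Ifc P * cl 0 hi 3 x +
            eps_Ipc P * cl 0 hi 4 x + eps_H P * cl 0 hi 5 x).
  assert (HE0 : 0 <= E).
  { unfold E. pose proof (Hc 1%nat); pose proof (Hc 2%nat); pose proof (Hc 3%nat);
    pose proof (Hc 4%nat); pose proof (Hc 5%nat). destruct HP as [? [? [? [? [? [? _]]]]]]. nra. }
  assert (HE1 : E <= epsSum7 P * Nb 0 loN hi x).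
  { unfold E, epsSum7. pose proof (Hc 1%nat); pose proof (Hc 2%nat); pose proof (Hc 3%nat);
    pose proof (Hc 4%nat); pose proof (Hc 5%nat). destruct HP as [? [? [? [? [? [? _]]]]]]. nra. }
  pose proof (clamp_in 0 1 b ltac:(lra)) as Hb.
  assert (HiN : iN 0 loN hi x * Nb 0 loN hi x = 1) by (unfold iN; field; lra).
  assert (0 < iN 0 loN hi x) by (unfold iN; apply Rinv_0_lt_compat; lra).
  assert (HEi : 0 <= iN 0 loN hi x * E <= epsSum7 P).
  { split. nra. apply Rmult_le_compat_l with (r := iN 0 loN hi x) in HE1; [|lra].
    replace (iN 0 loN hi x * (epsSum7 P * Nb 0 loN hi x)) with (epsSum7 P * (iN 0 loN hi x * Nb 0 loN hi x)) in HE1 by ring.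
    rewrite HiN in HE1. lra. }
  pose proof (Hc 0%nat).
  unfold Aa. fold E. split.
  - apply Rmult_le_pos; [|lra]. rewrite Rmult_assoc. apply Rmult_le_pos; lra.
  - rewrite Rmult_assoc with (r1 := clamp 0 1 b). 
    assert (clamp 0 1 b * (iN 0 loN hi x * E) <= epsSum7 P).
    { assert (0 <= epsSum7 P) by lra. nra. }
    apply Rmult_le_compat_r; lra.
Qed.

Lemma Gm_nonneg P loN hi pv th b x i : params_ok P -> 0 < loN <= hi -> 0 <= th <= 1 ->
  (forall j, 0 <= cp j pv) -> cp i x < 0 -> 0 <= cp i (Gm P 0 loN hi pv th b x).
Proof.
  intros HP HlN Hth Hpv Hx. rewrite Gm_cp.
  pose proof (Aa_facts P loN hi b x HP HlN) as HA.
  assert (Hc : forall j, 0 <= cl 0 hi j x <= hi) by (intros; apply cl_in; lra).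
  assert (Hz : cl 0 hi i x = 0).
  { unfold cl, clamp, Rmax, Rmin. repeat destruct Rle_dec; lra. }
  pose proof (Hpv i) as Hp.
  pose proof (Hc 0%nat); pose proof (Hc 1%nat); pose proof (Hc 2%nat); pose proof (Hc 3%nat);
  pose proof (Hc 4%nat); pose proof (Hc 5%nat); pose proof (Hc 6%nat).
  unfold params_ok in HP. destruct HP as [Hmu [? [? [? [? [? [? [? [? [? [? [? [? [? [? [? _]]]]]]]]]]]]]]]].
  destruct i as [|[|[|[|[|[|i]]]]]]; unfold wgt, Qc; simpl in Hz, Hp |- *.
  - assert (HA0 : Aa P 0 loN hi b x = 0).
    { pose proof (Rmult_le_compat_l (epsSum7 P) _ _ ltac:(unfold epsSum7; lra) (proj1 (Hc 0%nat))).
      rewrite Hz in HA. lra. }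
    rewrite Hz, HA0. lra.
  - rewrite Hz. nra.
  - rewrite Hz. nra.
  - rewrite Hz. nra.
  - rewrite Hz. nra.
  - rewrite Hz. nra.
  - change (cl 0 hi (S (S (S (S (S (S i)))))) x) with (cl 0 hi 6 x) in Hz. rewrite Hz. nra.
Qed.

Lemma Gm_Slow P loN hi pv th b x : params_ok P -> 0 < loN <= hi ->
  xS pv - (epsSum7 P + mu P) * cl 0 hi 0 x <= cp 0 (Gm P 0 loN hi pv th b x).
Proof.
  intros HP HlN. rewrite Gm_cp. pose proof (Aa_facts P loN hi b x HP HlN) as HA.
  unfold wgt, Qc. simpl. lra.
Qed.

Lemma half_le1 k : (/2)^k <= 1.
Proof.
  induction k. simpl; lra. simpl. assert (0 <= (/2)^k) by (apply pow_le; lra). lra.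
Qed.

Lemma half_pos k : 0 < (/2)^k.
Proof. apply pow_lt; lra. Qed.

Lemma half_mono n m : (n <= m)%nat -> (/2)^m <= (/2)^n.
Proof.
  intros H. replace m with (n + (m - n))%nat by lia. rewrite pow_add.
  pose proof (half_le1 (m-n)). pose proof (half_pos n). nra.
Qed.

Lemma half_small K eps : 0 < eps -> exists N, K * (/2)^N < eps.
Proof.
  intros He. destruct (Rle_lt_dec K 0).
  - exists 0%nat. simpl. lra.
  - destruct (pow_lt_1_zero (/2) ltac:(rewrite Rabs_right; lra) (eps / K) ltac:(apply Rdiv_lt_0_compat; lra)) as [N HN].
    exists N. specialize (HN N (le_n N)). rewrite Rabs_right in HN by (left; apply half_pos).
    apply (Rmult_lt_compat_l K) in HN; auto. replace (K * (eps / K)) with eps in HN by (field; lra). lra.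
Qed.

Lemma le_of_half z w K : (forall n, z <= w + K * (/2)^n) -> z <= w.
Proof.
  intros H. destruct (Rle_lt_dec z w); auto.
  destruct (half_small K (z - w) ltac:(lra)) as [N HN]. specialize (H N). lra.
Qed.

Lemma zero_of_half z K : (forall n, Rabs z <= K * (/2)^n) -> z = 0.
Proof.
  intros H. assert (Rabs z <= 0). { apply le_of_half with K. intros n. specialize (H n). lra. }
  pose proof (Rabs_pos z). destruct (Req_dec z 0) as [Z|Z]; auto. pose proof (Rabs_pos_lt z Z). lra.
Qed.

Lemma le_eps a b : (forall eps, 0 < eps -> a < b + eps) -> a <= b.
Proof. intros H. destruct (Rle_lt_dec a b); auto. specialize (H ((a-b)/2) ltac:(lra)). lra. Qed.

Lemma ex_RInt_cont (g : R -> R) a b : (forall t, continuous g t) -> ex_RInt g a b.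
Proof. intros H. apply (ex_RInt_continuous (V := R_CompleteNormedModule)). intros; apply H. Qed.

Lemma FTC (g : R -> R) a : (forall t, continuous g t) -> forall t, is_derive (fun s => RInt g a s) t (g t).
Proof.
  intros H t. apply (is_derive_RInt g (fun s => RInt g a s) a t). apply filter_forall. intros b0. apply (RInt_correct (V := R_CompleteNormedModule)).
  apply ex_RInt_cont; auto. apply H.
Qed.

Lemma RInt_cont (g : R -> R) a : (forall t, continuous g t) -> forall t, continuous (fun s => RInt g a s) t.
Proof.
  intros H t. apply (@ex_derive_continuous R_AbsRing R_NormedModule). eexists. apply FTC; auto.
Qed.

Lemma lip_cont (f : R -> R) M : (forall s t, Rabs (f s - f t) <= M * Rabs (s - t)) -> forall t, continuous f t.
Proof.
  intros H t. apply continuity_pt_filterlim. intros eps Heps.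
  exists (eps / (Rabs M + 1)). split. apply Rdiv_lt_0_compat; auto. pose proof (Rabs_pos M); lra.
  intros x [_ Hx]. simpl in *. unfold Rdist in *.
  specialize (H x t). pose proof (Rabs_pos M). pose proof (Rabs_pos (x - t)).
  assert (M * Rabs (x - t) <= Rabs M * Rabs (x - t)) by (apply Rmult_le_compat_r; auto; apply Rle_abs).
  assert (Rabs (x - t) * (Rabs M + 1) < eps).
  { apply (Rmult_lt_compat_r (Rabs M + 1)) in Hx; [|lra]. unfold Rdiv in Hx.
    rewrite Rmult_assoc, Rinv_l in Hx by lra. lra. }
  nra.
Qed.

Lemma RInt_abs_le (f g : R -> R) a b : a <= b -> ex_RInt f a b -> ex_RInt g a b ->
  (forall s, a < s < b -> Rabs (f s) <= g s) -> Rabs (RInt f a b) <= RInt g a b.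
Proof.
  intros Hab Hf Hg H. eapply Rle_trans. apply abs_RInt_le; auto.
  apply RInt_le; auto. apply (ex_RInt_norm f); auto.
Qed.

Lemma RInt_bound_const (f : R -> R) a b M : ex_RInt f a b ->
  (forall s, Rmin a b <= s <= Rmax a b -> Rabs (f s) <= M) -> Rabs (RInt f a b) <= M * Rabs (b - a).
Proof.
  intros Hf H. destruct (Rle_dec a b).
  - rewrite Rmin_left, Rmax_right in H by lra. rewrite (Rabs_right (b - a)) by lra.
    rewrite Rmult_comm. apply abs_RInt_le_const; auto.
  - rewrite Rmin_right, Rmax_left in H by lra.
    rewrite <- (opp_RInt_swap f b a (ex_RInt_swap f a b Hf)).
    change (opp (RInt f b a)) with (- RInt f b a). rewrite Rabs_Ropp.
    rewrite (Rabs_left (b - a)) by lra. replace (- (b - a)) with (a - b) by ring. rewrite Rmult_comm.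
    apply abs_RInt_le_const; auto. lra. apply ex_RInt_swap; auto.
Qed.

Lemma RInt_diff (g : R -> R) t s : (forall x, continuous g x) ->
  RInt g 0 t - RInt g 0 s = RInt g s t.
Proof.
  intros H. rewrite <- (RInt_Chasles g 0 s t) by (apply ex_RInt_cont; auto).
  change (plus (RInt g 0 s) (RInt g s t)) with (RInt g 0 s + RInt g s t). ring.
Qed.

Lemma RInt_exp c K t : 0 < K -> RInt (fun s => c * exp (K * s)) 0 t = c * (exp (K * t) - 1) / K.
Proof.
  intros HK. apply is_RInt_unique.
  replace (c * (exp (K * t) - 1) / K) with (minus ((fun s => c * exp (K*s) / K) t) ((fun s => c * exp (K*s) / K) 0)).
  2:{ unfold minus, plus, opp; simpl. rewrite Rmult_0_r, exp_0. field. lra. }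
  apply (is_RInt_derive (V := R_CompleteNormedModule) (fun s => c * exp (K*s) / K)).
  - intros x _. auto_derive; auto. field. lra.
  - intros x _. apply (@ex_derive_continuous R_AbsRing R_NormedModule). auto_derive. auto.
Qed.

Definition mk (f : nat -> R) : state := mkState (f 0%nat) (f 1%nat) (f 2%nat) (f 3%nat) (f 4%nat) (f 5%nat) (f 6%nat).

Lemma state_ext x y : (forall i, cp i x = cp i y) -> x = y.
Proof.
  intros H. destruct x, y. 
  pose proof (H 0%nat); pose proof (H 1%nat); pose proof (H 2%nat); pose proof (H 3%nat);
  pose proof (H 4%nat); pose proof (H 5%nat); pose proof (H 6%nat). simpl in *. subst. reflexivity.
Qed.

Lemma nd_le7 x y c : (forall i, Rabs (cp i x - cp i y) <= c) -> nd x y <= 7 * c.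
Proof.
  intros H. unfold nd.
  pose proof (H 0%nat); pose proof (H 1%nat); pose proof (H 2%nat); pose proof (H 3%nat);
  pose proof (H 4%nat); pose proof (H 5%nat); pose proof (H 6%nat). simpl in *. lra.
Qed.

Lemma exp_mono x y : x <= y -> exp x <= exp y.
Proof. intros H. destruct (Req_dec x y). subst; lra. left; apply exp_increasing; lra. Qed.

Lemma exp_ge1 x : 0 <= x -> 1 <= exp x.
Proof. intros. pose proof (exp_ineq1_le x). lra. Qed.

Definition RI (g : R -> R) (a b : R) : R := RInt g a b.

Lemma RI_minus (f g : R -> R) a b : ex_RInt f a b -> ex_RInt g a b ->
  RI (fun s => f s - g s) a b = RI f a b - RI g a b.
Proof. intros Hf Hg. unfold RI. apply (RInt_minus (V := R_CompleteNormedModule)); auto. Qed.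

Section Picard.
Variables (F : R -> state -> state) (x0 : state) (T L M : R).
Hypothesis HT : 0 < T.
Hypothesis HL : 0 < L.
Hypothesis HM : 0 <= M.
Hypothesis Hbnd : forall t x i, Rabs (cp i (F t x)) <= M.
Hypothesis Hlip : forall t x y i, Rabs (cp i (F t x) - cp i (F t y)) <= L * nd x y.
Hypothesis Hcont : forall u : R -> state, (forall i t, continuous (fun s => cp i (u s)) t) ->
  forall i t, continuous (fun s => cp i (F s (u s))) t.

Fixpoint X (n : nat) : R -> state :=
  match n with
  | O => fun _ => x0
  | S m => fun t => mk (fun i => cp i x0 + RI (fun s => cp i (F s (X m s))) 0 t)
  end.

Lemma X_S n t i : cp i (X (S n) t) = cp i x0 + RI (fun s => cp i (F s (X n s))) 0 t.
Proof. destruct i as [|[|[|[|[|[|i]]]]]]; reflexivity. Qed.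

Lemma X_cont n : forall i t, continuous (fun s => cp i (X n s)) t.
Proof.
  induction n; intros i t.
  - simpl. apply continuous_const.
  - apply continuous_ext with (fun s => cp i x0 + RI (fun s => cp i (F s (X n s))) 0 s).
    intros; rewrite X_S; auto.
    apply (continuous_plus (fun _ => cp i x0) (fun s => RI (fun s => cp i (F s (X n s))) 0 s)).
    apply continuous_const. apply RInt_cont. intros; apply Hcont; auto.
Qed.

Lemma gX_cont n i : forall t, continuous (fun s => cp i (F s (X n s))) t.
Proof. apply Hcont. apply X_cont. Qed.

Definition K := 14 * L.
Definition C0 := 7 * M * T.

Lemma D_bound n : forall t, 0 <= t <= T -> nd (X (S n) t) (X n t) <= C0 * (/2)^n * exp (K * t).
Proof.
  induction n; intros t Ht.
  - simpl pow. apply Rle_trans with (7 * (M * T)).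
    + apply nd_le7. intros i. rewrite X_S. simpl X.
      replace (cp i x0 + RI (fun s => cp i (F s x0)) 0 t - cp i x0) with (RI (fun s => cp i (F s x0)) 0 t) by ring.
      eapply Rle_trans. apply RInt_bound_const. apply ex_RInt_cont. apply (gX_cont 0).
      intros; apply Hbnd. rewrite Rminus_0_r, Rabs_right by lra. apply Rmult_le_compat_l; lra.
    + unfold C0. assert (1 <= exp (K * t)).
      { apply exp_ge1. unfold K. nra. }
      assert (0 <= M * T) by nra. nra.
  - apply Rle_trans with (7 * (C0 * (/2)^n * (exp (K * t) - 1) / 14)).
    + apply nd_le7. intros i. rewrite !X_S.
      replace (cp i x0 + RI (fun s => cp i (F s (X (S n) s))) 0 t - (cp i x0 + RI (fun s => cp i (F s (X n s))) 0 t))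
        with (RI (fun s => cp i (F s (X (S n) s)) - cp i (F s (X n s))) 0 t).
      2:{ rewrite RI_minus; try (apply ex_RInt_cont; apply gX_cont). ring. }
      eapply Rle_trans. apply RInt_abs_le with (g := fun s => L * (C0 * (/2)^n) * exp (K * s)). lra.
      apply ex_RInt_cont. intros; apply (continuous_minus (fun s => cp i (F s (X (S n) s))) (fun s => cp i (F s (X n s)))); apply gX_cont.
      apply ex_RInt_cont. intros. apply (@ex_derive_continuous R_AbsRing R_NormedModule). auto_derive; auto.
      intros s Hs. eapply Rle_trans. apply Hlip. rewrite Rmult_assoc. apply Rmult_le_compat_l. lra. apply IHn. lra.
      rewrite RInt_exp by (unfold K; lra). unfold K. right. field. lra.
    + assert (0 <= C0 * (/2)^n).
      { unfold C0. apply Rmult_le_pos. assert (0 <= M * T) by nra. lra. left; apply half_pos. }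
      simpl pow. pose proof (exp_pos (K * t)). nra.
Qed.

Definition C1 := 2 * C0 * exp (K * T).

Lemma C0_nonneg : 0 <= C0.
Proof. unfold C0. assert (0 <= M * T) by nra. lra. Qed.

Lemma X_cauchy t n k i : 0 <= t <= T ->
  Rabs (cp i (X (n + k) t) - cp i (X n t)) <= C1 * ((/2)^n - (/2)^(n+k)).
Proof.
  intros Ht. induction k.
  - rewrite Nat.add_0_r. replace (cp i (X n t) - cp i (X n t)) with 0 by ring. rewrite Rabs_R0. lra.
  - replace (cp i (X (n + S k) t) - cp i (X n t)) with
      ((cp i (X (S (n + k)) t) - cp i (X (n + k) t)) + (cp i (X (n + k) t) - cp i (X n t)))
      by (rewrite Nat.add_succ_r; ring).
    eapply Rle_trans. apply Rabs_triang.
    pose proof (nd_ge (X (S (n + k)) t) (X (n + k) t) i).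
    pose proof (D_bound (n + k) t Ht).
    assert (exp (K * t) <= exp (K * T)).
    { apply exp_mono. unfold K; nra. }
    pose proof C0_nonneg. pose proof (half_pos (n + k)).
    assert (C0 * (/2)^(n+k) * exp (K * t) <= C0 * (/2)^(n+k) * exp (K * T)).
    { apply Rmult_le_compat_l; auto. nra. }
    rewrite Nat.add_succ_r. simpl pow. unfold C1 in *. nra.
Qed.

Definition lim (i : nat) (t : R) := Lim_seq (fun n => cp i (X n (clamp 0 T t))).

Lemma lim_bound i t n : 0 <= t <= T -> Rabs (cp i (X n t) - lim i t) <= C1 * (/2)^n.
Proof.
  intros Ht. unfold lim. rewrite clamp_id by auto.
  set (u := fun n => cp i (X n t)).
  assert (Hpos1 : 0 <= C1).
  { unfold C1. pose proof C0_nonneg. pose proof (exp_pos (K*T)). nra. }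
  assert (Hc : forall n m, (n <= m)%nat -> Rabs (u m - u n) <= C1 * (/2)^n).
  { intros n0 m Hnm. unfold u. replace m with (n0 + (m - n0))%nat by lia.
    eapply Rle_trans. apply X_cauchy; auto. pose proof (half_pos (n0 + (m - n0))). nra. }
  assert (Hex : ex_finite_lim_seq u).
  { apply ex_lim_seq_cauchy_corr. intros eps.
    destruct (half_small C1 eps (cond_pos eps)) as [N HN]. exists N. intros n0 m Hn Hm.
    destruct (Nat.le_ge_cases n0 m) as [Hle|Hle].
    - rewrite <- Rabs_Ropp, Ropp_minus_distr. eapply Rle_lt_trans. apply Hc; auto.
      eapply Rle_lt_trans; [|exact HN]. apply Rmult_le_compat_l; auto. apply half_mono; auto.
    - eapply Rle_lt_trans. apply Hc; auto.
      eapply Rle_lt_trans; [|exact HN]. apply Rmult_le_compat_l; auto. apply half_mono; auto. }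
  pose proof (Lim_seq_correct' u Hex) as Hl. apply is_lim_seq_Reals in Hl.
  apply le_eps. intros eps Heps. destruct (Hl eps Heps) as [N HN].
  specialize (HN (Nat.max n N) ltac:(lia)). unfold Rdist in HN.
  specialize (Hc n (Nat.max n N) ltac:(lia)).
  change (cp i (X n t) - Lim_seq u) with (u n - Lim_seq u).
  replace (u n - Lim_seq u) with (-(u (Nat.max n N) - u n) + (u (Nat.max n N) - Lim_seq u)) by ring.
  eapply Rle_lt_trans. apply Rabs_triang. rewrite Rabs_Ropp. fold u in HN. lra.
Qed.

Definition ysol (t : R) : state := mk (fun i => lim i t).

Lemma ysol_cp i t : cp i (ysol t) = lim i t.
Proof. destruct i as [|[|[|[|[|[|i]]]]]]; reflexivity. Qed.

Lemma X_lip n i s t : Rabs (cp i (X n s) - cp i (X n t)) <= M * Rabs (s - t).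
Proof.
  destruct n.
  - simpl. replace (cp i x0 - cp i x0) with 0 by ring. rewrite Rabs_R0.
    pose proof (Rabs_pos (s - t)). nra.
  - rewrite !X_S. replace (cp i x0 + RI (fun s0 => cp i (F s0 (X n s0))) 0 s -
      (cp i x0 + RI (fun s0 => cp i (F s0 (X n s0))) 0 t)) with
      (RI (fun s0 => cp i (F s0 (X n s0))) 0 s - RI (fun s0 => cp i (F s0 (X n s0))) 0 t) by ring.
    rewrite RInt_diff by (apply gX_cont).
    apply RInt_bound_const. apply ex_RInt_cont; apply gX_cont. intros; apply Hbnd.
Qed.

Lemma clampT_in t : 0 <= clamp 0 T t <= T.
Proof. apply clamp_in; lra. Qed.

Lemma lim_clamp i t : lim i (clamp 0 T t) = lim i t.
Proof. unfold lim. rewrite (clamp_id 0 T (clamp 0 T t)) by (apply clampT_in). reflexivity. Qed.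

Lemma ysol_lip i s t : Rabs (cp i (ysol s) - cp i (ysol t)) <= M * Rabs (s - t).
Proof.
  rewrite !ysol_cp. rewrite <- (lim_clamp i s), <- (lim_clamp i t).
  eapply Rle_trans.
  2:{ apply Rmult_le_compat_l. auto. apply (clamp_lip 0 T s t). lra. }
  set (a := clamp 0 T s). set (a' := clamp 0 T t).
  assert (Ha : 0 <= a <= T) by apply clampT_in. assert (Ha' : 0 <= a' <= T) by apply clampT_in.
  apply le_of_half with (2 * C1). intros n.
  pose proof (lim_bound i a n Ha). pose proof (lim_bound i a' n Ha'). pose proof (X_lip n i a a').
  replace (lim i a - lim i a') with (-(cp i (X n a) - lim i a) + (cp i (X n a) - cp i (X n a')) + (cp i (X n a') - lim i a')) by ring.
  eapply Rle_trans. apply Rabs_triang. eapply Rle_trans. apply Rplus_le_compat_r. apply Rabs_triang.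
  rewrite Rabs_Ropp. lra.
Qed.

Lemma ysol_cont i t : continuous (fun s => cp i (ysol s)) t.
Proof. apply (lip_cont (fun s => cp i (ysol s)) M). intros; apply ysol_lip. Qed.

Lemma gy_cont i t : continuous (fun s => cp i (F s (ysol s))) t.
Proof. apply Hcont. intros; apply ysol_cont. Qed.

Lemma ysol_int i t : 0 <= t <= T -> cp i (ysol t) = cp i x0 + RI (fun s => cp i (F s (ysol s))) 0 t.
Proof.
  intros Ht.
  assert (Z : cp i (ysol t) - cp i x0 - RI (fun s => cp i (F s (ysol s))) 0 t = 0).
  2:{ lra. }
  apply zero_of_half with (C1 + 7 * L * C1 * T). intros n.
  pose proof (lim_bound i t (S n) Ht) as H1. rewrite X_S in H1. rewrite <- ysol_cp in H1.
  assert (H2 : Rabs (RI (fun s => cp i (F s (X n s))) 0 t - RI (fun s => cp i (F s (ysol s))) 0 t)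
              <= (7 * L * C1 * (/2)^n) * Rabs (t - 0)).
  { rewrite <- RI_minus by (apply ex_RInt_cont; intros; first [apply gX_cont|apply gy_cont]).
    apply RInt_bound_const.
    apply ex_RInt_cont. intros; apply (continuous_minus (fun s => cp i (F s (X n s))) (fun s => cp i (F s (ysol s)))); [apply gX_cont|apply gy_cont].
    intros s Hs. rewrite Rmin_left, Rmax_right in Hs by lra.
    eapply Rle_trans. apply Hlip.
    replace (7 * L * C1 * (/2)^n) with (L * (7 * (C1 * (/2)^n))) by ring.
    apply Rmult_le_compat_l. lra. apply nd_le7. intros j. rewrite ysol_cp. apply lim_bound. lra. }
  rewrite Rminus_0_r, (Rabs_right t) in H2 by lra.
  simpl pow in H1.
  assert (HC1 : 0 <= C1) by (unfold C1; pose proof C0_nonneg; pose proof (exp_pos (K*T)); apply Rmult_le_pos; lra).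
  assert (0 <= C1 * (/2)^n) by (apply Rmult_le_pos; [lra| left; apply half_pos]).
  replace (cp i (ysol t) - cp i x0 - RI (fun s => cp i (F s (ysol s))) 0 t) with
    (-(cp i x0 + RI (fun s => cp i (F s (X n s))) 0 t - cp i (ysol t)) +
     (RI (fun s => cp i (F s (X n s))) 0 t - RI (fun s => cp i (F s (ysol s))) 0 t)) by ring.
  eapply Rle_trans. apply Rabs_triang. rewrite Rabs_Ropp.
  assert (7 * L * C1 * (/2)^n * t <= 7 * L * C1 * T * (/2)^n).
  { replace (7 * L * C1 * T * (/2)^n) with (7 * L * (C1 * (/2)^n) * T) by ring.
    replace (7 * L * C1 * (/2)^n * t) with (7 * L * (C1 * (/2)^n) * t) by ring.
    apply Rmult_le_compat_l. nra. lra. }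
  nra.
Qed.

Lemma picard_exists : exists y : R -> state,
  (forall i t, continuous (fun s => cp i (y s)) t) /\ y 0 = x0 /\
  forall i, deriv_on 0 T (fun t => cp i (y t)) (fun t => cp i (F t (y t))).
Proof.
  exists ysol. split; [|split].
  - intros; apply ysol_cont.
  - apply state_ext. intros i. rewrite ysol_int by lra. unfold RI. rewrite RInt_point. unfold zero; simpl. ring.
  - intros i. apply deriv_of_global with (fun t => cp i x0 + RI (fun s => cp i (F s (ysol s))) 0 t).
    intros; apply ysol_int; auto.
    intros t _.
    assert (H := FTC (fun s => cp i (F s (ysol s))) 0 (gy_cont i) t).
    rewrite <- (plus_zero_l (cp i (F t (ysol t)))).
    apply (is_derive_plus (fun _ => cp i x0) (fun t => RI (fun s => cp i (F s (ysol s))) 0 t)).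
    apply (@is_derive_const R_AbsRing R_NormedModule). exact H.
Qed.
End Picard.

Lemma cR_plus (f g : R -> R) t : continuous f t -> continuous g t -> continuous (fun s => f s + g s) t.
Proof. intros. apply (continuous_plus f g); auto. Qed.
Lemma cR_minus (f g : R -> R) t : continuous f t -> continuous g t -> continuous (fun s => f s - g s) t.
Proof. intros. apply (continuous_minus f g); auto. Qed.
Lemma cR_mult (f g : R -> R) t : continuous f t -> continuous g t -> continuous (fun s => f s * g s) t.
Proof. intros. apply (continuous_mult f g); auto. Qed.
Lemma cR_const (c : R) t : continuous (fun _ : R => c) t.
Proof. apply continuous_const. Qed.
Lemma cR_abs (f : R -> R) t : continuous f t -> continuous (fun s => Rabs (f s)) t.
Proof. intros. apply (continuous_comp f Rabs); auto. apply (@continuous_abs R_AbsRing). Qed.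

Lemma LB_cont (f : R -> state -> R) (b : R -> R) (u : R -> state) t : LB f ->
  continuous b t -> (forall i, continuous (fun s => cp i (u s)) t) ->
  continuous (fun s => f (b s) (u s)) t.
Proof.
  intros [c [L [_ [HL [_ Hl]]]]] Hb Hu.
  set (g := fun s => Rabs (b s - b t) + nd (u s) (u t)).
  assert (Hg : continuous g t).
  { unfold g, nd. repeat apply cR_plus; apply cR_abs; apply cR_minus; try apply cR_const.
    auto. apply (Hu 0%nat). apply (Hu 1%nat). apply (Hu 2%nat). apply (Hu 3%nat). apply (Hu 4%nat).
    apply (Hu 5%nat). apply (Hu 6%nat). }
  apply continuity_pt_filterlim in Hg. apply continuity_pt_filterlim.
  intros eps Heps. destruct (Hg (eps / (L + 1)) ltac:(apply Rdiv_lt_0_compat; lra)) as [d [Hd H]].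
  exists d; split; auto. intros s [Hs1 Hs2]. simpl in *. unfold Rdist in *.
  specialize (H s (conj Hs1 Hs2)).
  assert (Hgt : g t = 0).
  { unfold g, nd. unfold Rminus. rewrite !Rplus_opp_r, !Rabs_R0. ring. }
  rewrite Hgt, Rminus_0_r in H.
  assert (0 <= g s) by (unfold g; apply dz_pos).
  rewrite Rabs_right in H by lra.
  specialize (Hl (b s) (u s) (b t) (u t)). fold (g s) in Hl.
  assert (g s * (L + 1) < eps).
  { apply (Rmult_lt_compat_r (L+1)) in H; [|lra]. unfold Rdiv in H. rewrite Rmult_assoc, Rinv_l in H by lra. lra. }
  nra.
Qed.

Lemma pvec_cont (I : inputs) : inputs_ok I -> forall i t, continuous (fun s => cp i (pvec I s)) t.
Proof.
  intros HI.
  assert (Hc : forall p, input_ok p -> forall t, continuous p t).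
  { intros p [_ [_ Hd]] t. apply (@ex_derive_continuous R_AbsRing R_NormedModule). apply (Hd 1%nat t). }
  destruct HI as [H0 [H1 [H2 [H3 [H4 [H5 H6]]]]]].
  intros i t. destruct i as [|[|[|[|[|[|i]]]]]]; simpl; apply Hc; auto.
Qed.

Lemma Gm_path_cont P lo loN hi (pv : R -> state) (th b : R -> R) (u : R -> state) t :
  lo <= hi -> loN <= hi -> 0 < loN + 6 * lo ->
  (forall i, continuous (fun s => cp i (pv s)) t) -> continuous th t -> continuous b t ->
  (forall i, continuous (fun s => cp i (u s)) t) ->
  forall i, continuous (fun s => cp i (Gm P lo loN hi (pv s) (th s) (b s) (u s))) t.
Proof.
  intros H1 H2 H3 Hpv Hth Hb Hu i.
  apply continuous_ext with (fun s => cp i (pv s) + wgt i (th s) * Aa P lo loN hi (b s) (u s) + Qc P lo loN hi i (u s)).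
  intros; rewrite Gm_cp; auto.
  apply cR_plus. apply cR_plus. auto. apply cR_mult.
  destruct i as [|[|[|i]]]; simpl; try apply cR_const; auto. apply cR_minus; auto. apply cR_const.
  apply (LB_cont (Aa P lo loN hi)); auto. apply LB_Aa; auto.
  apply (LB_cont (fun _ x => Qc P lo loN hi i x) (fun _ => 0)); auto. apply LB_Qc; auto. apply cR_const.
Qed.

Lemma deriv_on_ext a b f f' g' : (forall t, a <= t <= b -> f' t = g' t) -> deriv_on a b f f' -> deriv_on a b f g'.
Proof.
  intros E Hd t Ht eps Heps. destruct (Hd t Ht eps Heps) as [d [Hd0 H]]. exists d; split; auto.
  intros. rewrite <- E; auto.
Qed.

Definition S7 (f : nat -> R) := f 0%nat + f 1%nat + f 2%nat + f 3%nat + f 4%nat + f 5%nat + f 6%nat.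

Lemma key_ineq (e d : nat -> R) L bb : 0 <= L ->
  (forall i, Rabs (d i) <= L * (bb + S7 (fun j => Rabs (e j)))) ->
  2 * S7 (fun i => e i * d i) <= 21 * L * S7 (fun i => (e i)^2) + L * bb^2.
Proof.
  intros HL H. unfold S7 in *.
  set (E1 := Rabs (e 0%nat) + Rabs (e 1%nat) + Rabs (e 2%nat) + Rabs (e 3%nat) + Rabs (e 4%nat) + Rabs (e 5%nat) + Rabs (e 6%nat)) in *.
  assert (Hp : forall i, e i * d i <= Rabs (e i) * (L * (bb + E1))).
  { intros i. eapply Rle_trans. apply Rle_abs. rewrite Rabs_mult. apply Rmult_le_compat_l. apply Rabs_pos. apply H. }
  assert (Hsq : E1^2 <= 7 * ((e 0%nat)^2 + (e 1%nat)^2 + (e 2%nat)^2 + (e 3%nat)^2 + (e 4%nat)^2 + (e 5%nat)^2 + (e 6%nat)^2)).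
  { rewrite <- !(pow2_abs (e _)). unfold E1.
    set (a0 := Rabs (e 0%nat)); set (a1 := Rabs (e 1%nat)); set (a2 := Rabs (e 2%nat));
    set (a3 := Rabs (e 3%nat)); set (a4 := Rabs (e 4%nat)); set (a5 := Rabs (e 5%nat)); set (a6 := Rabs (e 6%nat)).
    assert (Eq : 7 * (a0^2 + a1^2 + a2^2 + a3^2 + a4^2 + a5^2 + a6^2) - (a0 + a1 + a2 + a3 + a4 + a5 + a6)^2 = (a0 - a1)^2 + (a0 - a2)^2 + (a0 - a3)^2 + (a0 - a4)^2 + (a0 - a5)^2 + (a0 - a6)^2 + (a1 - a2)^2 + (a1 - a3)^2 + (a1 - a4)^2 + (a1 - a5)^2 + (a1 - a6)^2 + (a2 - a3)^2 + (a2 - a4)^2 + (a2 - a5)^2 + (a2 - a6)^2 + (a3 - a4)^2 + (a3 - a5)^2 + (a3 - a6)^2 + (a4 - a5)^2 + (a4 - a6)^2 + (a5 - a6)^2) by ring.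
    pose proof (pow2_ge_0 (a0 - a1)). pose proof (pow2_ge_0 (a0 - a2)). pose proof (pow2_ge_0 (a0 - a3)). pose proof (pow2_ge_0 (a0 - a4)). pose proof (pow2_ge_0 (a0 - a5)). pose proof (pow2_ge_0 (a0 - a6)). pose proof (pow2_ge_0 (a1 - a2)). pose proof (pow2_ge_0 (a1 - a3)). pose proof (pow2_ge_0 (a1 - a4)). pose proof (pow2_ge_0 (a1 - a5)). pose proof (pow2_ge_0 (a1 - a6)). pose proof (pow2_ge_0 (a2 - a3)). pose proof (pow2_ge_0 (a2 - a4)). pose proof (pow2_ge_0 (a2 - a5)). pose proof (pow2_ge_0 (a2 - a6)). pose proof (pow2_ge_0 (a3 - a4)). pose proof (pow2_ge_0 (a3 - a5)). pose proof (pow2_ge_0 (a3 - a6)). pose proof (pow2_ge_0 (a4 - a5)). pose proof (pow2_ge_0 (a4 - a6)). pose proof (pow2_ge_0 (a5 - a6)).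
    lra. }
  pose proof (Hp 0%nat); pose proof (Hp 1%nat); pose proof (Hp 2%nat); pose proof (Hp 3%nat);
  pose proof (Hp 4%nat); pose proof (Hp 5%nat); pose proof (Hp 6%nat).
  assert (HS : e 0%nat * d 0%nat + e 1%nat * d 1%nat + e 2%nat * d 2%nat + e 3%nat * d 3%nat +
    e 4%nat * d 4%nat + e 5%nat * d 5%nat + e 6%nat * d 6%nat <= E1 * (L * (bb + E1))).
  { unfold E1 at 1. lra. }
  assert (2 * E1 * bb <= E1^2 + bb^2) by (pose proof (pow2_ge_0 (E1 - bb)); nra).
  assert (L * (2 * E1 * bb) <= L * (E1^2 + bb^2)) by (apply Rmult_le_compat_l; lra).
  assert (L * E1^2 <= L * (7 * ((e 0%nat)^2 + (e 1%nat)^2 + (e 2%nat)^2 + (e 3%nat)^2 + (e 4%nat)^2 + (e 5%nat)^2 + (e 6%nat)^2))) by (apply Rmult_le_compat_l; lra).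
  nra.
Qed.

Lemma is_derive_Rplus (f g : R -> R) t a b : is_derive f t a -> is_derive g t b ->
  is_derive (fun s => f s + g s) t (a + b).
Proof. intros. exact (is_derive_plus f g t a b H H0). Qed.

Lemma is_derive_sq (f g : R -> R) t a b : is_derive f t a -> is_derive g t b ->
  is_derive (fun s => (f s - g s)^2) t (2 * (f t - g t) * (a - b)).
Proof.
  intros Ha Hb. assert (H := is_derive_pow (fun s => f s - g s) 2 t (a - b) (is_derive_minus f g t a b Ha Hb)).
  replace (2 * (f t - g t) * (a - b)) with (INR 2 * (a - b) * (f t - g t) ^ Init.Nat.pred 2) by (simpl; ring).
  exact H.
Qed.

Lemma dist2_derive (x y : R -> state) (dx dy : nat -> R) t :
  (forall i, is_derive (fun s => cp i (x s)) t (dx i)) -> (forall i, is_derive (fun s => cp i (y s)) t (dy i)) ->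
  is_derive (fun s => dist2 (x s) (y s)) t (S7 (fun i => 2 * (cp i (x t) - cp i (y t)) * (dx i - dy i))).
Proof.
  intros Hx Hy. unfold dist2, S7.
  repeat apply is_derive_Rplus; apply is_derive_sq;
  first [apply (Hx 0%nat) | apply (Hy 0%nat) | apply (Hx 1%nat) | apply (Hy 1%nat) | apply (Hx 2%nat) | apply (Hy 2%nat)
        | apply (Hx 3%nat) | apply (Hy 3%nat) | apply (Hx 4%nat) | apply (Hy 4%nat) | apply (Hx 5%nat) | apply (Hy 5%nat)
        | apply (Hx 6%nat) | apply (Hy 6%nat)].
Qed.

Lemma dist2_nonneg x y : 0 <= dist2 x y.
Proof.
  unfold dist2.
  pose proof (pow2_ge_0 (xS x - xS y)); pose proof (pow2_ge_0 (xEfc x - xEfc y));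
  pose proof (pow2_ge_0 (xEpc x - xEpc y)); pose proof (pow2_ge_0 (xIfc x - xIfc y));
  pose proof (pow2_ge_0 (xIpc x - xIpc y)); pose proof (pow2_ge_0 (xH x - xH y));
  pose proof (pow2_ge_0 (xR x - xR y)). lra.
Qed.

Lemma dist2_zero x y : dist2 x y <= 0 -> x = y.
Proof.
  intros H. unfold dist2 in H.
  pose proof (pow2_ge_0 (xS x - xS y)); pose proof (pow2_ge_0 (xEfc x - xEfc y));
  pose proof (pow2_ge_0 (xEpc x - xEpc y)); pose proof (pow2_ge_0 (xIfc x - xIfc y));
  pose proof (pow2_ge_0 (xIpc x - xIpc y)); pose proof (pow2_ge_0 (xH x - xH y));
  pose proof (pow2_ge_0 (xR x - xR y)).
  apply state_ext. intros i.
  assert (forall a, 0 <= a^2 -> a^2 <= 0 -> a = 0) by (intros; nra).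
  destruct i as [|[|[|[|[|[|i]]]]]]; simpl; apply Rminus_diag_uniq; apply H7; lra.
Qed.

Lemma cont_on_cp a b (x : R -> state) dx : a <= b -> (forall i, deriv_on a b (fun s => cp i (x s)) (dx i)) ->
  forall i, cont_on a b (fun s => cp i (x s)).
Proof. intros Hab H i. eapply deriv_cont. apply H. Qed.

Lemma cont_on_dist2 a b (x y : R -> state) : a <= b -> (forall i, cont_on a b (fun s => cp i (x s))) ->
  (forall i, cont_on a b (fun s => cp i (y s))) -> cont_on a b (fun s => dist2 (x s) (y s)).
Proof.
  intros Hab Hx Hy. unfold dist2.
  assert (Hsq : forall f, cont_on a b f -> cont_on a b (fun s => f s ^ 2)).
  { intros f Hf. apply (cont_on_comp a b f (fun v => v^2)); auto. intros v.
    apply (@ex_derive_continuous R_AbsRing R_NormedModule). auto_derive; auto. }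
  repeat apply cont_on_plus; auto; apply Hsq; apply cont_on_minus; auto;
  first [apply (Hx 0%nat) | apply (Hy 0%nat) | apply (Hx 1%nat) | apply (Hy 1%nat) | apply (Hx 2%nat) | apply (Hy 2%nat)
        | apply (Hx 3%nat) | apply (Hy 3%nat) | apply (Hx 4%nat) | apply (Hy 4%nat) | apply (Hx 5%nat) | apply (Hy 5%nat)
        | apply (Hx 6%nat) | apply (Hy 6%nat)].
Qed.

Lemma cont_on_nd a b (x y : R -> state) : a <= b -> (forall i, cont_on a b (fun s => cp i (x s))) ->
  (forall i, cont_on a b (fun s => cp i (y s))) -> cont_on a b (fun s => nd (x s) (y s)).
Proof.
  intros Hab Hx Hy. unfold nd.
  assert (Hsq : forall f, cont_on a b f -> cont_on a b (fun s => Rabs (f s))).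
  { intros f Hf. apply (cont_on_comp a b f Rabs); auto. intros v. apply (@continuous_abs R_AbsRing). }
  repeat apply cont_on_plus; auto; apply Hsq; apply cont_on_minus; auto;
  first [apply (Hx 0%nat) | apply (Hy 0%nat) | apply (Hx 1%nat) | apply (Hy 1%nat) | apply (Hx 2%nat) | apply (Hy 2%nat)
        | apply (Hx 3%nat) | apply (Hy 3%nat) | apply (Hx 4%nat) | apply (Hy 4%nat) | apply (Hx 5%nat) | apply (Hy 5%nat)
        | apply (Hx 6%nat) | apply (Hy 6%nat)].
Qed.

Lemma nd_nonneg x y : 0 <= nd x y.
Proof. pose proof (nd_ge x y 0%nat). pose proof (Rabs_pos (cp 0%nat x - cp 0%nat y)). lra. Qed.

Lemma nd_zero x y : nd x y <= 0 -> x = y.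
Proof.
  intros H. apply state_ext. intros i. pose proof (nd_ge x y i). pose proof (Rabs_pos (cp i x - cp i y)).
  apply Rminus_diag_uniq. destruct (Req_dec (cp i x - cp i y) 0); auto.
  pose proof (Rabs_pos_lt _ H2). lra.
Qed.

Lemma uniq_sup (y z : R -> state) T (dy dz : nat -> R -> R) eta c :
  0 < T -> 0 < eta -> 0 <= c ->
  (forall i, deriv_on 0 T (fun s => cp i (y s)) (dy i)) ->
  (forall i, deriv_on 0 T (fun s => cp i (z s)) (dz i)) ->
  z 0 = y 0 ->
  (forall t, 0 <= t <= T -> (forall i, Rabs (cp i (z t) - cp i (y t)) < eta) ->
     S7 (fun i => 2 * (cp i (z t) - cp i (y t)) * (dz i t - dy i t)) <= c * dist2 (z t) (y t)) ->
  forall t, 0 <= t <= T -> z t = y t.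
Proof.
  intros HT Heta Hc Hdy Hdz H0 Hloc.
  set (E := fun t => 0 <= t <= T /\ forall s, 0 <= s <= t -> z s = y s).
  assert (HE0 : E 0). { split. lra. intros s Hs. replace s with 0 by lra. auto. }
  assert (HEb : bound E). { exists T. intros t [Ht _]. lra. }
  destruct (completeness E HEb (ex_intro _ 0 HE0)) as [m [Hub Hlub]].
  assert (Hm0 : 0 <= m) by (apply Hub; auto).
  assert (HmT : m <= T). { apply Hlub. intros t [Ht _]. lra. }
  assert (Cy := cont_on_cp 0 T y dy ltac:(lra) Hdy).
  assert (Cz := cont_on_cp 0 T z dz ltac:(lra) Hdz).
  assert (Ch := cont_on_nd 0 T z y ltac:(lra) Cz Cy).
  assert (C1 : forall s, 0 <= s < m -> z s = y s).
  { intros s Hs. destruct (classic (exists t, E t /\ s < t)) as [[t [[Ht Ht2] Hst]]|Hn].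
    - apply Ht2. lra.
    - exfalso. assert (m <= s). { apply Hlub. intros t Et. destruct (Rle_dec t s); auto.
        exfalso; apply Hn. exists t; split; auto; lra. }
      lra. }
  assert (C2 : z m = y m).
  { destruct (Req_dec m 0) as [Z|Z]. { rewrite Z; auto. }
    apply nd_zero. apply le_eps. intros eps Heps.
    destruct (Ch m ltac:(lra) eps Heps) as [d [Hd H]].
    set (s := Rmax 0 (m - d/2)).
    assert (Hs : 0 <= s < m). { unfold s, Rmax; destruct Rle_dec; lra. }
    assert (Hsd : Rabs (s - m) < d). { unfold s, Rmax; destruct Rle_dec; rewrite Rabs_left; lra. }
    specialize (H s ltac:(lra) Hsd). rewrite (C1 s Hs) in H.
    assert (nd (y s) (y s) = 0). { unfold nd. unfold Rminus. rewrite !Rplus_opp_r, !Rabs_R0. ring. }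
    rewrite H1 in H. rewrite Rabs_minus_sym, Rminus_0_r in H. pose proof (Rle_abs (nd (z m) (y m))). lra. }
  assert (C3 : m = T).
  { destruct (Req_dec m T) as [Z|Z]; auto. exfalso.
    destruct (Ch m ltac:(lra) eta Heta) as [d [Hd H]].
    set (t1 := Rmin (m + d/2) T).
    assert (Ht1 : m < t1 <= T). { unfold t1, Rmin; destruct Rle_dec; lra. }
    assert (Hclose : forall s, m <= s <= t1 -> nd (z s) (y s) < eta).
    { intros s Hs. assert (Hsd : Rabs (s - m) < d).
      { rewrite Rabs_right by lra. unfold t1 in Hs. pose proof (Rmin_l (m + d/2) T). lra. }
      specialize (H s ltac:(lra) Hsd). rewrite C2 in H.
      assert (nd (y m) (y m) = 0). { unfold nd. unfold Rminus. rewrite !Rplus_opp_r, !Rabs_R0. ring. }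
      rewrite H1, Rminus_0_r in H. pose proof (Rle_abs (nd (z s) (y s))). lra. }
    assert (HG : forall t, m <= t <= t1 -> dist2 (z t) (y t) <= exp (c * (t - m)) * 0).
    { apply gronwall with (W' := fun s => S7 (fun i => 2 * (cp i (z s) - cp i (y s)) * (dz i s - dy i s)))
        (g := fun _ => 0); try lra.
      - intros s Hs. apply dist2_derive; intros i; apply (deriv_interior 0 T); auto; lra.
      - apply cont_on_sub with 0 T; try lra. apply cont_on_dist2; auto; lra.
      - intros s. apply (@is_derive_const R_AbsRing R_NormedModule).
      - intros s Hs. rewrite Rplus_0_r. apply Hloc. lra. intros i.
        eapply Rle_lt_trans. apply nd_ge. apply Hclose; auto.
      - intros; lra.
      - rewrite C2. unfold dist2. unfold Rminus. rewrite !Rplus_opp_r. right. ring. }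
    assert (E t1).
    { split. lra. intros s Hs. destruct (Rlt_dec s m). apply C1; lra.
      pose proof (HG s ltac:(lra)) as HG2. rewrite Rmult_0_r in HG2. apply dist2_zero; auto. }
    pose proof (Hub t1 H1). lra. }
  intros t Ht. destruct (Rlt_dec t m). apply C1; lra. replace t with m by lra. auto.
Qed.

Definition inK (Smin B : R) (x : state) : Prop :=
  Smin <= xS x <= B /\ 0 <= xEfc x <= B /\ 0 <= xEpc x <= B /\ 0 <= xIfc x <= B /\
  0 <= xIpc x <= B /\ 0 <= xH x <= B /\ 0 <= xR x <= B.

Lemma mono_incr a b F F' : a <= b ->
  (forall t, a < t < b -> is_derive F t (F' t)) -> cont_on a b F ->
  (forall t, a <= t <= b -> 0 <= F' t) -> F a <= F b.
Proof.
  intros Hab Hd Hc Hp.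
  assert (H := mono a b (fun s => - F s) (fun s => - F' s) Hab).
  cut (- F b <= - F a). lra. apply H.
  - intros t Ht. exact (is_derive_opp F t (F' t) (Hd t Ht)).
  - apply (cont_on_comp a b F Ropp); auto. intros v. apply (@continuous_opp R_UniformSpace R_AbsRing R_NormedModule (fun x => x)). apply continuous_id.
  - intros t Ht. specialize (Hp t Ht). lra.
Qed.

Lemma Ntot_derive (y : R -> state) (d : nat -> R) t :
  (forall i, is_derive (fun s => cp i (y s)) t (d i)) -> is_derive (fun s => Ntot (y s)) t (S7 d).
Proof.
  intros H. unfold Ntot, S7. repeat apply is_derive_Rplus;
  first [apply (H 0%nat) | apply (H 1%nat) | apply (H 2%nat) | apply (H 3%nat) | apply (H 4%nat) | apply (H 5%nat) | apply (H 6%nat)].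
Qed.

Lemma cont_on_Ntot a b (y : R -> state) : a <= b -> (forall i, cont_on a b (fun s => cp i (y s))) ->
  cont_on a b (fun s => Ntot (y s)).
Proof.
  intros Hab H. unfold Ntot. repeat apply cont_on_plus; auto;
  first [apply (H 0%nat) | apply (H 1%nat) | apply (H 2%nat) | apply (H 3%nat) | apply (H 4%nat) | apply (H 5%nat) | apply (H 6%nat)].
Qed.

Lemma inputs_bound I : inputs_ok I -> exists Mp, 0 <= Mp /\ forall j t, Rabs (cp j (pvec I t)) <= Mp.
Proof.
  intros [[[M0 H0] _] [[[M1 H1] _] [[[M2 H2] _] [[[M3 H3] _] [[[M4 H4] _] [[[M5 H5] _] [[M6 H6] _]]]]]]].
  exists (Rabs M0 + Rabs M1 + Rabs M2 + Rabs M3 + Rabs M4 + Rabs M5 + Rabs M6). split.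
  pose proof (Rabs_pos M0); pose proof (Rabs_pos M1); pose proof (Rabs_pos M2); pose proof (Rabs_pos M3);
  pose proof (Rabs_pos M4); pose proof (Rabs_pos M5); pose proof (Rabs_pos M6). lra.
  intros j t.
  pose proof (Rabs_pos M0); pose proof (Rabs_pos M1); pose proof (Rabs_pos M2); pose proof (Rabs_pos M3);
  pose proof (Rabs_pos M4); pose proof (Rabs_pos M5); pose proof (Rabs_pos M6).
  pose proof (Rle_abs M0); pose proof (Rle_abs M1); pose proof (Rle_abs M2); pose proof (Rle_abs M3);
  pose proof (Rle_abs M4); pose proof (Rle_abs M5); pose proof (Rle_abs M6).
  destruct j as [|[|[|[|[|[|j]]]]]]; simpl;
  [specialize (H0 t) | specialize (H1 t) | specialize (H2 t) | specialize (H3 t) | specialize (H4 t) | specialize (H5 t) | specialize (H6 t)]; lra.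
Qed.

Lemma pvec_nonneg I : inputs_ok I -> forall j t, 0 <= cp j (pvec I t).
Proof.
  intros [[_ [H0 _]] [[_ [H1 _]] [[_ [H2 _]] [[_ [H3 _]] [[_ [H4 _]] [[_ [H5 _]] [_ [H6 _]]]]]]]] j t.
  destruct j as [|[|[|[|[|[|j]]]]]]; simpl; auto.
Qed.

Section Main.
Variables (P : params) (I : inputs) (blo bhi T : R) (theta : R -> R) (x0 : state) (Mp : R).
Hypothesis HP : params_ok P.
Hypothesis HI : inputs_ok I.
Hypothesis Hblo : 0 < blo.
Hypothesis Hbb : blo <= bhi.
Hypothesis Hbhi : bhi <= 1.
Hypothesis HT : 0 < T.
Hypothesis Hth : cont_on 0 T theta.
Hypothesis Hth01 : forall t, 0 <= t <= T -> 0 <= theta t <= 1.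
Hypothesis Hx0 : init_ok x0.
Hypothesis HMp0 : 0 <= Mp.
Hypothesis HMp : forall j t, Rabs (cp j (pvec I t)) <= Mp.

Definition N0 := Ntot x0.
Definition BB := N0 + 7 * Mp * T.
Definition kk := epsSum7 P + mu P.
Definition Smin := xS x0 * exp (-(kk * T)).
Definition thc (s : R) := theta (clamp 0 T s).
Definition Fb (beta : R -> R) (t : R) (x : state) := Gm P 0 Smin BB (pvec I t) (thc t) (beta (clamp 0 T t)) x.

Lemma kk_pos : 0 < kk.
Proof. unfold kk, epsSum7. unfold params_ok in HP. destruct HP as [? [? [? [? [? [? _]]]]]]. lra. Qed.

Lemma x0_nonneg j : 0 <= cp j x0.
Proof. destruct Hx0 as [? [? [? [? [? [? ?]]]]]]. destruct j as [|[|[|[|[|[|j]]]]]]; simpl; lra. Qed.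

Lemma Smin_pos : 0 < Smin.
Proof. unfold Smin. destruct Hx0. apply Rmult_lt_0_compat; auto. apply exp_pos. Qed.

Lemma Smin_le : Smin <= xS x0.
Proof.
  unfold Smin. destruct Hx0. pose proof kk_pos.
  assert (exp (-(kk*T)) <= 1). { rewrite <- exp_0. apply exp_mono. nra. }
  nra.
Qed.

Lemma S0_le_B : xS x0 <= BB.
Proof.
  unfold BB, N0, Ntot. pose proof (x0_nonneg 1); pose proof (x0_nonneg 2); pose proof (x0_nonneg 3);
  pose proof (x0_nonneg 4); pose proof (x0_nonneg 5); pose proof (x0_nonneg 6). simpl in *.
  assert (0 <= Mp * T) by nra. lra.
Qed.

Lemma Smin_B : 0 < Smin <= BB.
Proof. pose proof Smin_pos; pose proof Smin_le; pose proof S0_le_B. lra. Qed.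

Lemma thc_cont t : continuous thc t.
Proof. apply (cont_clamp 0 T theta); auto; lra. Qed.

Lemma thc_01 t : 0 <= thc t <= 1.
Proof. unfold thc. apply Hth01. apply clamp_in; lra. Qed.

Lemma beta_cont beta : beta_ok T blo bhi beta -> forall t, continuous (fun s => beta (clamp 0 T s)) t.
Proof. intros [Hb _]. apply (cont_clamp 0 T beta); auto; lra. Qed.

Lemma exist_sol beta : beta_ok T blo bhi beta -> exists y : R -> state,
  (forall i t, continuous (fun s => cp i (y s)) t) /\ y 0 = x0 /\
  forall i, deriv_on 0 T (fun t => cp i (y t)) (fun t => cp i (Fb beta t (y t))).
Proof.
  intros Hb. pose proof Smin_B as HSB.
  destruct (Gm_lip P 0 Smin BB ltac:(lra) ltac:(lra) ltac:(lra)) as [L [HL Hlip]].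
  destruct (Gm_bnd P 0 Smin BB ltac:(lra) ltac:(lra) ltac:(lra) Mp HMp0) as [M [HM Hbnd]].
  apply (picard_exists (Fb beta) x0 T L M); auto; try lra.
  - intros t x i. unfold Fb. apply Hbnd. apply thc_01. auto.
  - intros t x y i. unfold Fb. eapply Rle_trans. apply Hlip. apply thc_01.
    unfold Rminus at 1. rewrite Rplus_opp_r, Rabs_R0, Rplus_0_l. lra.
  - intros u Hu i t. unfold Fb.
    apply (Gm_path_cont P 0 Smin BB (pvec I) thc (fun s => beta (clamp 0 T s)) u t); try lra; auto.
    intros; apply pvec_cont; auto. apply thc_cont. apply beta_cont; auto.
Qed.

Lemma inK_sol beta y : beta_ok T blo bhi beta -> y 0 = x0 ->
  (forall i, deriv_on 0 T (fun t => cp i (y t)) (fun t => cp i (Fb beta t (y t)))) ->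
  forall t, 0 <= t <= T -> inK Smin BB (y t).
Proof.
  intros Hb Hy0 Hd.
  pose proof Smin_B as HSB. pose proof kk_pos as Hkk.
  assert (Cy : forall i, cont_on 0 T (fun s => cp i (y s))) by (intros; eapply deriv_cont; apply Hd).
  assert (Hnn : forall i t, 0 <= t <= T -> 0 <= cp i (y t)).
  { intros i. apply (nonneg_lemma 0 T _ _ ltac:(lra) (Hd i)).
    - cbv beta. rewrite Hy0. apply x0_nonneg.
    - intros t Ht Hneg. unfold Fb. apply Gm_nonneg; auto. apply thc_01. intros; apply pvec_nonneg; auto. }
  assert (HN : forall t, 0 <= t <= T -> Ntot (y t) <= N0 + 7 * Mp * t).
  { intros t Ht.
    assert (H := mono_incr 0 t (fun s => N0 + 7 * Mp * s - Ntot (y s)) (fun s => 7 * Mp - Ntot (Fb beta s (y s))) ltac:(lra)).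
    cbv beta in H. rewrite Hy0 in H.
    cut (N0 + 7 * Mp * 0 - Ntot x0 <= N0 + 7 * Mp * t - Ntot (y t)). unfold N0. lra.
    apply H.
    - intros s Hs.
      apply (is_derive_minus (fun s => N0 + 7 * Mp * s) (fun s => Ntot (y s)) s (7 * Mp) (S7 (fun i => cp i (Fb beta s (y s))))).
      auto_derive; auto. ring.
      apply Ntot_derive. intros i. apply (deriv_interior 0 T (fun s => cp i (y s)) (fun t => cp i (Fb beta t (y t))) s (Hd i)). lra.
    - apply cont_on_minus; try lra. apply cont_on_global; try lra. intros; apply (@ex_derive_continuous R_AbsRing R_NormedModule). auto_derive; auto.
      apply cont_on_sub with 0 T; try lra. apply cont_on_Ntot; auto. lra.
    - intros s Hs. unfold Fb. rewrite Gm_sum.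
      assert (Hc : forall j, 0 <= cl 0 BB j (y s) <= BB) by (intros; apply cl_in; lra).
      pose proof (Hc 0%nat); pose proof (Hc 1%nat); pose proof (Hc 2%nat); pose proof (Hc 3%nat);
      pose proof (Hc 4%nat); pose proof (Hc 5%nat); pose proof (Hc 6%nat).
      unfold params_ok in HP. destruct HP as [Hmu [? [? [? [? [? [? [? [? [? [? [HdI [HdH _]]]]]]]]]]]]].
      assert (Ntot (pvec I s) <= 7 * Mp).
      { unfold Ntot. pose proof (HMp 0%nat s); pose proof (HMp 1%nat s); pose proof (HMp 2%nat s);
        pose proof (HMp 3%nat s); pose proof (HMp 4%nat s); pose proof (HMp 5%nat s); pose proof (HMp 6%nat s).
        simpl in *.
        repeat match goal with H : Rabs ?a <= _ |- _ => pose proof (Rle_abs a); revert H end. intros. lra. }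
      nra. }
  intros t Ht.
  assert (Hle : forall i, cp i (y t) <= BB).
  { intros i. pose proof (HN t Ht). unfold BB.
    pose proof (Hnn 0%nat t Ht); pose proof (Hnn 1%nat t Ht); pose proof (Hnn 2%nat t Ht); pose proof (Hnn 3%nat t Ht);
    pose proof (Hnn 4%nat t Ht); pose proof (Hnn 5%nat t Ht); pose proof (Hnn 6%nat t Ht).
    assert (Mp * t <= Mp * T) by (apply Rmult_le_compat_l; lra).
    unfold Ntot in H. destruct i as [|[|[|[|[|[|i]]]]]]; simpl in *; lra. }
  assert (HS : Smin <= xS (y t)).
  { assert (H := mono_incr 0 t (fun s => xS (y s) * exp (kk * s))
       (fun s => cp 0 (Fb beta s (y s)) * exp (kk * s) + xS (y s) * (kk * exp (kk * s))) ltac:(lra)).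
    cbv beta in H. rewrite Hy0, Rmult_0_r, exp_0, Rmult_1_r in H.
    assert (H2 : xS x0 <= xS (y t) * exp (kk * t)).
    { apply H.
      - intros s Hs. apply (is_derive_mult (fun s => xS (y s)) (fun s => exp (kk * s))).
        apply (deriv_interior 0 T (fun s => cp 0 (y s)) (fun t => cp 0 (Fb beta t (y t))) s (Hd 0%nat)). lra.
        auto_derive; auto. ring. intros; apply Rmult_comm.
      - apply cont_on_mult; try lra. apply cont_on_sub with 0 T; try lra. apply (Cy 0%nat).
        apply cont_on_global; try lra. intros; apply (@ex_derive_continuous R_AbsRing R_NormedModule). auto_derive; auto.
      - intros s Hs. unfold Fb.
        pose proof (Gm_Slow P Smin BB (pvec I s) (thc s) (beta (clamp 0 T s)) (y s) HP HSB) as G.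
        assert (E : cl 0 BB 0 (y s) = xS (y s)).
        { unfold cl. apply clamp_id. split. apply (Hnn 0%nat s); lra.
          pose proof (HN s ltac:(lra)). unfold Ntot in H0.
          pose proof (Hnn 1%nat s ltac:(lra)); pose proof (Hnn 2%nat s ltac:(lra)); pose proof (Hnn 3%nat s ltac:(lra));
          pose proof (Hnn 4%nat s ltac:(lra)); pose proof (Hnn 5%nat s ltac:(lra)); pose proof (Hnn 6%nat s ltac:(lra)).
          assert (Mp * s <= Mp * T) by (apply Rmult_le_compat_l; lra). unfold BB. simpl in *. lra. }
        rewrite E in G. fold kk in G.
        assert (Hq : 0 <= cp 0 (Gm P 0 Smin BB (pvec I s) (thc s) (beta (clamp 0 T s)) (y s)) + kk * xS (y s)).
        { pose proof (pvec_nonneg I HI 0%nat s) as Hp0. change (cp 0 (pvec I s)) with (xS (pvec I s)) in Hp0. lra. }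
        pose proof (exp_pos (kk * s)).
        replace (cp 0 (Gm P 0 Smin BB (pvec I s) (thc s) (beta (clamp 0 T s)) (y s)) * exp (kk * s) + xS (y s) * (kk * exp (kk * s)))
          with ((cp 0 (Gm P 0 Smin BB (pvec I s) (thc s) (beta (clamp 0 T s)) (y s)) + kk * xS (y s)) * exp (kk * s)) by ring.
        apply Rmult_le_pos; lra. }
    assert (exp (-(kk * T)) <= exp (-(kk * t))) by (apply exp_mono; nra).
    assert (Hinv : exp (kk * t) * exp (-(kk * t)) = 1).
    { rewrite <- exp_plus. replace (kk * t + - (kk * t)) with 0 by ring. apply exp_0. }
    unfold Smin. destruct Hx0.
    apply Rle_trans with (xS x0 * exp (-(kk * t))). apply Rmult_le_compat_l; lra.
    apply (Rmult_le_compat_r (exp (-(kk * t)))) in H2; [|left; apply exp_pos].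
    rewrite Rmult_assoc, Hinv, Rmult_1_r in H2. auto. }
  pose proof (Hnn 1%nat t Ht); pose proof (Hnn 2%nat t Ht); pose proof (Hnn 3%nat t Ht);
  pose proof (Hnn 4%nat t Ht); pose proof (Hnn 5%nat t Ht); pose proof (Hnn 6%nat t Ht).
  pose proof (Hle 0%nat); pose proof (Hle 1%nat); pose proof (Hle 2%nat); pose proof (Hle 3%nat);
  pose proof (Hle 4%nat); pose proof (Hle 5%nat); pose proof (Hle 6%nat).
  simpl in *. unfold inK. repeat split; lra.
Qed.

Lemma sol_deriv beta x : is_solution P I theta beta T x0 x ->
  forall i, deriv_on 0 T (fun s => cp i (x s)) (fun s => cp i (rhs P I theta beta s (x s))).
Proof.
  intros [_ [H0 [H1 [H2 [H3 [H4 [H5 H6]]]]]]] i. destruct i as [|[|[|[|[|[|i]]]]]]; assumption.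
Qed.

Lemma sol_full beta : beta_ok T blo bhi beta -> exists y, is_solution P I theta beta T x0 y /\
  (forall z, is_solution P I theta beta T x0 z -> forall t, 0 <= t <= T -> z t = y t) /\
  (forall t, 0 <= t <= T -> inK Smin BB (y t)).
Proof.
  intros Hb. destruct (exist_sol beta Hb) as [y [Hyc [Hy0 Hyd]]].
  pose proof (inK_sol beta y Hb Hy0 Hyd) as HK.
  pose proof Smin_B as HSB.
  assert (Hbeta01 : forall t, 0 <= t <= T -> 0 <= beta t <= 1).
  { destruct Hb as [_ Hb2]. intros t Ht. specialize (Hb2 t Ht). lra. }
  assert (Hrhs : forall t, 0 <= t <= T -> Fb beta t (y t) = rhs P I theta beta t (y t)).
  { intros t Ht. unfold Fb, thc. rewrite clamp_id by lra.
    destruct (HK t Ht) as [? [? [? [? [? [? ?]]]]]]. apply Gm_rhs; try lra. auto. }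
  assert (Hyd' : forall i, deriv_on 0 T (fun t => cp i (y t)) (fun t => cp i (rhs P I theta beta t (y t)))).
  { intros i. apply deriv_on_ext with (fun t => cp i (Fb beta t (y t))); auto. intros t Ht. rewrite Hrhs; auto. }
  exists y. split; [|split; auto].
  - unfold is_solution. split; auto.
    split. apply (Hyd' 0%nat). split. apply (Hyd' 1%nat). split. apply (Hyd' 2%nat). split. apply (Hyd' 3%nat).
    split. apply (Hyd' 4%nat). split. apply (Hyd' 5%nat). apply (Hyd' 6%nat).
  - intros z Hz.
    set (eta := Smin / 14).
    destruct (Gm_lip P (- eta) (Smin / 2) (BB + Smin) ltac:(unfold eta; lra) ltac:(lra) ltac:(unfold eta; lra)) as [L' [HL' Hlip']].
    apply (uniq_sup y z T (fun i t => cp i (rhs P I theta beta t (y t))) (fun i t => cp i (rhs P I theta beta t (z t))) eta (21 * L')); try lra.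
    + unfold eta; lra.
    + exact Hyd'.
    + apply sol_deriv; auto.
    + destruct Hz as [Hz0 _]. rewrite Hz0, Hy0. auto.
    + intros t Ht Hclose.
      destruct (HK t Ht) as [K0 [K1 [K2 [K3 [K4 [K5 K6]]]]]].
      pose proof (Rabs_def2 _ _ (Hclose 0%nat)) as C0; pose proof (Rabs_def2 _ _ (Hclose 1%nat)) as C1;
      pose proof (Rabs_def2 _ _ (Hclose 2%nat)) as C2; pose proof (Rabs_def2 _ _ (Hclose 3%nat)) as C3;
      pose proof (Rabs_def2 _ _ (Hclose 4%nat)) as C4; pose proof (Rabs_def2 _ _ (Hclose 5%nat)) as C5;
      pose proof (Rabs_def2 _ _ (Hclose 6%nat)) as C6. simpl in C0, C1, C2, C3, C4, C5, C6.
      assert (Heta : eta = Smin / 14) by reflexivity. pose proof (Hbeta01 t Ht) as Hbt.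
      rewrite <- (Gm_rhs P (- eta) (Smin / 2) (BB + Smin) I theta beta t (z t)) by (simpl; lra).
      rewrite <- (Gm_rhs P (- eta) (Smin / 2) (BB + Smin) I theta beta t (y t)) by (simpl; lra).
      set (G' := Gm P (- eta) (Smin / 2) (BB + Smin) (pvec I t) (theta t) (beta t)).
      assert (Hkey := key_ineq (fun i => cp i (z t) - cp i (y t)) (fun i => cp i (G' (z t)) - cp i (G' (y t))) L' 0 ltac:(lra)).
      assert (Hk : 2 * S7 (fun i => (cp i (z t) - cp i (y t)) * (cp i (G' (z t)) - cp i (G' (y t))))
                 <= 21 * L' * S7 (fun i => (cp i (z t) - cp i (y t)) ^ 2) + L' * 0 ^ 2).
      { apply Hkey. intros i. unfold G'. eapply Rle_trans. apply Hlip'. apply Hth01; auto.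
        right. replace (beta t - beta t) with 0 by ring. rewrite Rabs_R0. reflexivity. }
      unfold S7 in *. unfold dist2. simpl in *. lra.
Qed.
End Main.


Theorem main_theorem (P : params) (I : inputs) (blo bhi : R) (T : R)
  (theta : R -> R) (x0 : state) :
  params_ok P -> inputs_ok I -> 0 < blo -> blo <= bhi -> bhi <= 1 ->
  0 < T ->
  cont_on 0 T theta -> (forall t, 0 <= t <= T -> 0 <= theta t <= 1) ->
  init_ok x0 ->
  (forall beta : R -> R, beta_ok T blo bhi beta ->
     exists x : R -> state, is_solution P I theta beta T x0 x /\
       forall y : R -> state, is_solution P I theta beta T x0 y ->
         forall t, 0 <= t <= T -> y t = x t) /\
  (exists C : R, 0 < C /\
     forall (beta bhat : R -> R) (x xhat : R -> state),
       beta_ok T blo bhi beta -> beta_ok T blo bhi bhat ->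
       is_solution P I theta beta T x0 x ->
       is_solution P I theta bhat T x0 xhat ->
       forall t, 0 <= t <= T ->
         dist2 (x t) (xhat t) <= C * RInt (fun s => (beta s - bhat s)^2) 0 t).
Proof.
  intros HP HI Hblo Hbb Hbhi HT Hth Hth01 Hx0.
  destruct (inputs_bound I HI) as [Mp [HMp0 HMp]].
  pose proof (sol_full P I blo bhi T theta x0 Mp HP HI Hblo Hbhi HT Hth Hth01 Hx0 HMp0 HMp) as SF.
  split.
  - intros beta Hb. destruct (SF beta Hb) as [y [Hs [Hu _]]]. exists y; split; auto.
  - pose proof (Smin_B P T x0 Mp HP HT Hx0 HMp0) as HSB.
    set (Sm := Smin P T x0) in *. set (B := BB T x0 Mp) in *.
    destruct (Gm_lip P 0 Sm B ltac:(lra) ltac:(lra) ltac:(lra)) as [L [HL Hlip]].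
    exists (exp (21 * L * T) * L). split. apply Rmult_lt_0_compat; auto. apply exp_pos.
    intros beta bhat x xhat Hb Hbh Hx Hxh t Ht.
    destruct (SF beta Hb) as [y [_ [Hyu HyK]]]. destruct (SF bhat Hbh) as [yh [_ [Hyhu HyhK]]].
    assert (HxK : forall s, 0 <= s <= T -> inK Sm B (x s)) by (intros s Hs; rewrite (Hyu x Hx s Hs); auto).
    assert (HxhK : forall s, 0 <= s <= T -> inK Sm B (xhat s)) by (intros s Hs; rewrite (Hyhu xhat Hxh s Hs); auto).
    set (bc := fun s => beta (clamp 0 T s)). set (bhc := fun s => bhat (clamp 0 T s)).
    assert (Hbc : forall s, continuous (fun u => (bc u - bhc u)^2) s).
    { intros s. apply (continuous_comp (fun u => bc u - bhc u) (fun v => v^2)).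
      apply cR_minus; apply beta_cont with blo bhi; auto; lra.
      apply (@ex_derive_continuous R_AbsRing R_NormedModule). auto_derive; auto. }
    assert (HG := gronwall 0 T (fun s => dist2 (x s) (xhat s))
      (fun s => S7 (fun i => 2 * (cp i (x s) - cp i (xhat s)) * (cp i (rhs P I theta beta s (x s)) - cp i (rhs P I theta bhat s (xhat s)))))
      (fun s => L * (bc s - bhc s)^2) (fun s => L * RI (fun u => (bc u - bhc u)^2) 0 s) (21 * L) ltac:(lra) ltac:(lra)).
    assert (Hd1 := sol_deriv P I T theta x0 beta x Hx).
    assert (Hd2 := sol_deriv P I T theta x0 bhat xhat Hxh).
    assert (HW : dist2 (x t) (xhat t) <= exp (21 * L * (t - 0)) * (L * RI (fun u => (bc u - bhc u)^2) 0 t)).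
    { apply HG; auto.
      - intros s Hs. apply dist2_derive; intros i.
        apply (deriv_interior 0 T _ _ s (Hd1 i)); lra. apply (deriv_interior 0 T _ _ s (Hd2 i)); lra.
      - apply cont_on_dist2. lra. apply cont_on_cp with (fun i s => cp i (rhs P I theta beta s (x s))); auto; lra.
        apply cont_on_cp with (fun i s => cp i (rhs P I theta bhat s (xhat s))); auto; lra.
      - intros s. apply (is_derive_scal (fun s => RI (fun u => (bc u - bhc u)^2) 0 s)). apply FTC; auto.
      - unfold RI. rewrite RInt_point. unfold zero; simpl. ring.
      - intros s Hs.
        destruct (HxK s Hs) as [K0 [K1 [K2 [K3 [K4 [K5 K6]]]]]].
        destruct (HxhK s Hs) as [J0 [J1 [J2 [J3 [J4 [J5 J6]]]]]].
        assert (B1 : 0 <= beta s <= 1) by (destruct Hb as [_ Hb2]; specialize (Hb2 s Hs); lra).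
        assert (B2 : 0 <= bhat s <= 1) by (destruct Hbh as [_ Hb2]; specialize (Hb2 s Hs); lra).
        rewrite <- (Gm_rhs P 0 Sm B I theta beta s (x s)) by lra.
        rewrite <- (Gm_rhs P 0 Sm B I theta bhat s (xhat s)) by lra.
        assert (Hkey := key_ineq (fun i => cp i (x s) - cp i (xhat s))
           (fun i => cp i (Gm P 0 Sm B (pvec I s) (theta s) (beta s) (x s)) - cp i (Gm P 0 Sm B (pvec I s) (theta s) (bhat s) (xhat s)))
           L (Rabs (beta s - bhat s)) ltac:(lra)).
        assert (Hk : 2 * S7 (fun i => (cp i (x s) - cp i (xhat s)) * (cp i (Gm P 0 Sm B (pvec I s) (theta s) (beta s) (x s)) - cp i (Gm P 0 Sm B (pvec I s) (theta s) (bhat s) (xhat s))))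
                 <= 21 * L * S7 (fun i => (cp i (x s) - cp i (xhat s)) ^ 2) + L * (Rabs (beta s - bhat s)) ^ 2).
        { apply Hkey. intros i. eapply Rle_trans. apply Hlip. apply Hth01; auto. right. reflexivity. }
        rewrite pow2_abs in Hk.
        unfold bc, bhc. rewrite clamp_id by lra.
        unfold S7 in *. unfold dist2. simpl in *. lra.
      - intros s Hs. apply Rmult_le_pos. lra. apply pow2_ge_0.
      - destruct Hx as [Hx0' _]; destruct Hxh as [Hxh0 _]. cbv beta. rewrite Hx0', Hxh0.
        unfold dist2. unfold Rminus. rewrite !Rplus_opp_r. right. ring. }
    assert (HR : RI (fun u => (bc u - bhc u)^2) 0 t = RInt (fun s => (beta s - bhat s)^2) 0 t).
    { unfold RI. apply RInt_ext. intros u Hu. rewrite Rmin_left, Rmax_right in Hu by lra.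
      unfold bc, bhc. rewrite clamp_id by lra. reflexivity. }
    assert (HR0 : 0 <= RI (fun u => (bc u - bhc u)^2) 0 t).
    { unfold RI. apply RInt_ge_0. lra. apply ex_RInt_cont; auto. intros; apply pow2_ge_0. }
    rewrite HR in HW, HR0.
    assert (exp (21 * L * (t - 0)) <= exp (21 * L * T)) by (apply exp_mono; nra).
    assert (0 <= L * RInt (fun s => (beta s - bhat s)^2) 0 t) by (apply Rmult_le_pos; lra).
    eapply Rle_trans. apply HW.
    apply Rle_trans with (exp (21 * L * T) * (L * RInt (fun s => (beta s - bhat s)^2) 0 t)).
    apply Rmult_le_compat_r; auto. rewrite <- Rmult_assoc. right; reflexivity.
Qed.


Theorem proposition3 (P : params) (I : inputs) (blo bhi : R) (T : R)
  (theta : R -> R) (x0 : state) :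
  params_ok P -> inputs_ok I -> 0 < blo -> blo <= bhi -> bhi <= 1 ->
  0 < T ->
  cont_on 0 T theta -> (forall t, 0 <= t <= T -> 0 <= theta t <= 1) ->
  init_ok x0 ->
  (forall beta : R -> R, beta_ok T blo bhi beta ->
     exists x : R -> state, is_solution P I theta beta T x0 x /\
       forall y : R -> state, is_solution P I theta beta T x0 y ->
         forall t, 0 <= t <= T -> y t = x t) /\
  (exists C : R, 0 < C /\
     forall (beta bhat : R -> R) (x xhat : R -> state),
       beta_ok T blo bhi beta -> beta_ok T blo bhi bhat ->
       is_solution P I theta beta T x0 x ->
       is_solution P I theta bhat T x0 xhat ->
       forall t, 0 <= t <= T ->
         dist2 (x t) (xhat t) <= C * RInt (fun s => (beta s - bhat s)^2) 0 t).
Proof. exact (main_theorem P I blo bhi T theta x0). Qed.
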